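(* Let $0<r<R$, $\gamma\in\mathbb{R}\setminus\{0\}$, $N\in\mathbb{N}$, $\mu\geqslant1$ an integer, $n\geqslant1$, $\nu_k=k\mu$, and let $H^0,\ldots,H^n$ be the spaces $$H^j=\Bigl\{\theta=\sum_{k=1}^\infty p_k(x^{{\rm i}\gamma})x^k\ \Big|\ p_k\in\mathcal{O}_{\nu_k}(\overline{\mathcal D}\setminus\{0\}),\ \|\theta\|_j=\sum_{k=1}^\infty\bigl\|(k+N+{\rm i}\gamma\delta_t)^jp_k\bigr\|<+\infty\Bigr\}.$$ Then: (i) $H^n\subset\ldots\subset H^1\subset H^0\subset\mathcal{O}(S_1)$, where $S_1$ is any open sector with vertex at the origin, of opening less than $2\pi$ and of radius $1$, such that $S_1\subset\{(-1/\gamma)\ln R<\arg x<(-1/\gamma)\ln r\}$ if $\gamma>0$ and $S_1\subset\{(-1/\gamma)\ln r<\arg x<(-1/\gamma)\ln R\}$ if $\gamma<0$ (meaning every $\theta\in H^0$ converges uniformly on $S_1$ to a holomorphic function); moreover $\|\theta\|_{j-1}\leqslant\|\theta\|_j$ for every $\theta\in H^j$, $j=1,\ldots,n$. (ii) For any $\theta_1,\theta_2\in H^0$ one has $\theta_1\theta_2\in H^0$ and $\|\theta_1\theta_2\|_0\leqslant\|\theta_1\|_0\|\theta_2\|_0$. (iii) For any $\theta\in H^j$ ($j=1,\ldots,n$) one has $\delta\theta\in H^{j-1}$, and the operator $\delta:H^j\to H^{j-1}$ is continuous.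
   Context: $\delta_t=t\,d/dt$ and $\delta=x\,d/dx$; on exotic series $\delta$ acts termwise by $\delta\bigl(p(x^{{\rm i}\gamma})x^k\bigr)=\bigl((k+{\rm i}\gamma\delta_t)p\bigr)(x^{{\rm i}\gamma})x^k$, and the product of exotic series is the formal (Cauchy) product collecting terms by powers of $x$. $x^{{\rm i}\gamma}=e^{{\rm i}\gamma\ln x}$ with a branch of $\ln x$ on the sector, so $|x^{{\rm i}\gamma}|=e^{-\gamma\arg x}$. For an integer $\nu\geqslant1$, $\mathcal{O}_\nu(\overline{\mathcal D}\setminus\{0\})$ denotes the space of functions $f$ holomorphic in $\{0<|t|<R\}$ with pole of order at most $\nu$ at $t=0$, Laurent expansion $f=t^{-\nu}\sum_{k\geqslant0}f_kt^k$, and finite norm $\|f\|=r^{-\nu}\sum_{k\geqslant0}|f_k|R^k$. *)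

(* Defs.v *)
From Stdlib Require Import Reals.
From Coquelicot Require Import Coquelicot.
Open Scope R_scope.

Fixpoint Cpow (z : C) (n : nat) : C :=
  match n with O => RtoC 1 | S n' => Cmult z (Cpow z n') end.

Definition Cseries (a : nat -> C) : C :=
  (Series (fun m => fst (a m)), Series (fun m => snd (a m))).

(* The space O_nu(closure D \ {0}).  A function f = t^{-nu} sum_m f_m t^m    *)
(* (holomorphic in 0<|t|<R, pole of order <= nu at 0) is represented by     *)
(* its coefficient sequence (f_m)_m; the norm is                            *)
(*   ||f|| = r^{-nu} sum_m |f_m| R^m.                                        *)

Definition inO (RR : R) (f : nat -> C) : Prop :=
  ex_series (fun m => Cmod (f m) * RR ^ m).

Definition Onorm (r RR : R) (nu : nat) (f : nat -> C) : R :=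
  / (r ^ nu) * Series (fun m => Cmod (f m) * RR ^ m).

Definition Oeval (nu : nat) (f : nat -> C) (t : C) : C :=
  Cmult (Cinv (Cpow t nu)) (Cseries (fun m => Cmult (f m) (Cpow t m))).

(* the operator (a + i gamma delta_t) on O_nu, delta_t = t d/dt:
   delta_t (t^{m-nu}) = (m-nu) t^{m-nu} *)
Definition opT (gamma : R) (nu : nat) (a : R) (f : nat -> C) : nat -> C :=
  fun m => Cmult (RtoC a + Ci * RtoC (gamma * (INR m - INR nu)))%C (f m).

(* Exotic series theta = sum_{k>=1} p_k(x^{i gamma}) x^k are represented by *)
(* theta : nat -> (nat -> C), theta k = coefficients of p_k in O_{k mu};    *)
(* the k = 0 component is required to vanish.                              *)

Definition Hterm (r RR gamma : R) (N mu j : nat) (theta : nat -> nat -> C) (k : nat) : R :=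
  Onorm r RR (k * mu) (Nat.iter j (opT gamma (k * mu) (INR (k + N))) (theta k)).

Definition Hnorm (r RR gamma : R) (N mu j : nat) (theta : nat -> nat -> C) : R :=
  Series (Hterm r RR gamma N mu j theta).

Definition inH (r RR gamma : R) (N mu j : nat) (theta : nat -> nat -> C) : Prop :=
  (forall m, theta 0%nat m = RtoC 0) /\
  (forall k, (1 <= k)%nat -> inO RR (theta k)) /\
  (forall k, (1 <= k)%nat ->
     inO RR (Nat.iter j (opT gamma (k * mu) (INR (k + N))) (theta k))) /\
  ex_series (Hterm r RR gamma N mu j theta).

(* formal (Cauchy) product of exotic series, collecting powers of x:
   (theta1 theta2)_k = sum_{a+b=k} p_a p_b, and p_a p_b in O_{k mu} has
   coefficients the Cauchy product of those of p_a and p_b. *)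
Definition Hmul (theta1 theta2 : nat -> nat -> C) : nat -> nat -> C :=
  fun k m => sum_n (fun a => sum_n (fun i =>
       Cmult (theta1 a i) (theta2 (k - a)%nat (m - i)%nat)) m) k.

(* delta = x d/dx acting termwise:
   delta (p(x^{i gamma}) x^k) = ((k + i gamma delta_t) p)(x^{i gamma}) x^k *)
Definition Hdelta (gamma : R) (mu : nat) (theta : nat -> nat -> C) : nat -> nat -> C :=
  fun k => opT gamma (k * mu) (INR k) (theta k).

Definition Hsub (theta1 theta2 : nat -> nat -> C) : nat -> nat -> C :=
  fun k m => Cminus (theta1 k m) (theta2 k m).

(* Open sector of radius 1 with vertex 0: x = rho e^{i phi}, 0<rho<1,       *)
(* alpha < phi < beta (phi = the chosen branch of arg x on the sector).     *)

Definition polarC (rho phi : R) : C := (rho * cos phi, rho * sin phi).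

Definition in_sector (alpha beta : R) (x : C) : Prop :=
  exists rho phi, 0 < rho < 1 /\ alpha < phi < beta /\ x = polarC rho phi.

(* x^{i gamma} = exp(i gamma ln x), ln x = ln rho + i phi *)
Definition xig (gamma rho phi : R) : C :=
  (exp (- gamma * phi) * cos (gamma * ln rho),
   exp (- gamma * phi) * sin (gamma * ln rho)).

Definition Hpartial (gamma : R) (mu : nat) (theta : nat -> nat -> C)
    (n : nat) (rho phi : R) : C :=
  sum_n (fun k => Cmult (Oeval (k * mu) (theta k) (xig gamma rho phi))
                        (Cpow (polarC rho phi) k)) n.

(* Main.v *)
Require Import Defs.
From Stdlib Require Import Reals Lra Lia Psatz ClassicalEpsilon FunctionalExtensionality.
From Coquelicot Require Import Coquelicot.
Open Scope R_scope.

Lemma deriv_eps {K : AbsRing} {V : NormedModule K} (f : K -> V) x l :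
 is_derive f x l <-> forall eps, 0 < eps -> exists d, 0 < d /\ forall y, norm (minus y x) < d ->
   norm (minus (minus (f y) (f x)) (scal (minus y x) l)) <= eps * norm (minus y x).
Proof.
split.
- intros [_ H] eps Heps.
  specialize (H x (fun P HP => HP) (mkposreal eps Heps)).
  apply (locally_le_locally_norm (K:=K) (V:=AbsRing_NormedModule K)) in H. destruct H as [d Hd].
  exists d. split. apply cond_pos. intros y Hy. apply (Hd y Hy).
- intros H. split. apply is_linear_scal_l.
  intros x' Hx'. apply (is_filter_lim_locally_unique (K:=K) (V:=AbsRing_NormedModule K)) in Hx'. subst x'.
  intros eps. apply (locally_norm_le_locally (K:=K) (V:=AbsRing_NormedModule K)).
  destruct (H eps (cond_pos eps)) as [d [Hd H']]. exists (mkposreal d Hd). exact H'.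
Qed.

Lemma Cderiv_eps (f : C -> C) x l :
 is_derive (K:=C_AbsRing) (V:=C_NormedModule) f x l <-> forall eps, 0 < eps -> exists d, 0 < d /\ forall y, Cmod (y - x) < d ->
   Cmod (f y - f x - (y - x) * l) <= eps * Cmod (y - x).
Proof. apply (deriv_eps (K:=C_AbsRing) (V:=C_NormedModule)). Qed.

Lemma Rderiv_eps (f : R -> R) x l :
 is_derive f x l <-> forall eps, 0 < eps -> exists d, 0 < d /\ forall y, Rabs (y - x) < d ->
   Rabs (f y - f x - (y - x) * l) <= eps * Rabs (y - x).
Proof. apply (deriv_eps (K:=R_AbsRing) (V:=R_NormedModule)). Qed.

Lemma Cmod_fst (z : C) : Rabs (fst z) <= Cmod z.
Proof. apply (re_le_Cmod z). Qed.

Lemma Cmod_snd (z : C) : Rabs (snd z) <= Cmod z.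
Proof.
  destruct z as [a b]. unfold Cmod; simpl.
  rewrite <- sqrt_Rsqr_abs. apply sqrt_le_1_alt. unfold Rsqr. nra.
Qed.

Lemma Cmod_le_sum (z : C) : Cmod z <= Rabs (fst z) + Rabs (snd z).
Proof.
  destruct z as [a b]. unfold Cmod; simpl.
  rewrite <- (sqrt_Rsqr (Rabs a + Rabs b)).
  2: { pose proof (Rabs_pos a); pose proof (Rabs_pos b); lra. }
  apply sqrt_le_1_alt. unfold Rsqr.
  pose proof (Rabs_pos a); pose proof (Rabs_pos b).
  assert (a*a = Rabs a * Rabs a) by (rewrite <- Rabs_mult; symmetry; apply Rabs_right; nra).
  assert (b*b = Rabs b * Rabs b) by (rewrite <- Rabs_mult; symmetry; apply Rabs_right; nra).
  nra.
Qed.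

Definition Cexp (w : C) : C := (exp (fst w) * cos (snd w), exp (fst w) * sin (snd w)).

Lemma Cexp_add a b : Cexp (a + b)%C = (Cexp a * Cexp b)%C.
Proof.
  destruct a as [a1 a2]; destruct b as [b1 b2]. unfold Cexp, Cmult, Cplus; simpl.
  rewrite exp_plus, cos_plus, sin_plus. apply injective_projections; simpl; ring.
Qed.

Lemma Cexp_0 : Cexp 0 = 1%C.
Proof. unfold Cexp; simpl. rewrite exp_0, cos_0, sin_0. apply injective_projections; simpl; ring. Qed.

Lemma Cmod_Cexp w : Cmod (Cexp w) = exp (fst w).
Proof.
  destruct w as [a b]; unfold Cmod, Cexp; cbn [fst snd].
  replace ((exp a * cos b) ^ 2 + (exp a * sin b) ^ 2) with (Rsqr (exp a)).
  apply sqrt_Rsqr. left; apply exp_pos.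
  unfold Rsqr. pose proof (sin2_cos2 b). unfold Rsqr in H. nra.
Qed.

Lemma Cexp_neq0 w : Cexp w <> 0%C.
Proof. intro H. pose proof (Cmod_Cexp w). rewrite H, Cmod_0 in H0. pose proof (exp_pos (fst w)). lra. Qed.

Lemma Cexp_neg w : Cexp (- w)%C = Cinv (Cexp w).
Proof.
  assert (H: (Cexp (-w) * Cexp w)%C = 1%C).
  { rewrite <- Cexp_add. replace (-w + w)%C with (RtoC 0) by ring. apply Cexp_0. }
  pose proof (Cexp_neq0 w).
  replace (Cexp (-w)) with (Cexp (-w) * Cexp w * / Cexp w)%C by (field; auto).
  rewrite H. ring.
Qed.

Lemma real_near (f : R -> R) x l : derivable_pt_lim f x l ->
  forall eps, 0 < eps -> exists d, 0 < d /\ forall h, Rabs h < d -> Rabs (f (x + h) - f x - h * l) <= eps * Rabs h.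
Proof.
  intros H eps Heps. apply is_derive_Reals in H. rewrite Rderiv_eps in H.
  destruct (H eps Heps) as [d [Hd H']]. exists d; split; auto.
  intros h Hh. specialize (H' (x + h)). replace (x + h - x) with h in H' by ring. auto.
Qed.

Lemma Cexp_near0 : forall eps, 0 < eps -> exists d, 0 < d /\ forall h, Cmod h < d ->
  Cmod (Cexp h - 1 - h)%C <= eps * Cmod h.
Proof.
  intros eps Heps.
  set (e := Rmin eps 1).
  assert (He : 0 < e) by (apply Rmin_pos; lra).
  assert (He1 : e <= 1) by apply Rmin_r. assert (He2 : e <= eps) by apply Rmin_l.
  destruct (real_near exp 0 1) with (eps := e/8) as [d1 [Hd1 H1]].
  { pose proof (derivable_pt_lim_exp 0). rewrite exp_0 in H. exact H. } lra.
  destruct (real_near cos 0 0) with (eps := e/8) as [d2 [Hd2 H2]].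
  { pose proof (derivable_pt_lim_cos 0). rewrite sin_0, Ropp_0 in H. exact H. } lra.
  destruct (real_near sin 0 1) with (eps := e/8) as [d3 [Hd3 H3]].
  { pose proof (derivable_pt_lim_sin 0). rewrite cos_0 in H. exact H. } lra.
  exists (Rmin (Rmin d1 d2) (Rmin d3 (e/8))).
  split. { repeat apply Rmin_pos; lra. }
  intros [a b] Hh.
  pose proof (Cmod_fst (a,b)) as Ha; pose proof (Cmod_snd (a,b)) as Hb. simpl in Ha, Hb.
  assert (Hm1 := Rmin_l (Rmin d1 d2) (Rmin d3 (e/8))).
  assert (Hm2 := Rmin_r (Rmin d1 d2) (Rmin d3 (e/8))).
  pose proof (Rmin_l d1 d2); pose proof (Rmin_r d1 d2).
  pose proof (Rmin_l d3 (e/8)); pose proof (Rmin_r d3 (e/8)).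
  set (ch := Cmod (a,b)) in *.
  specialize (H1 a ltac:(lra)). specialize (H2 b ltac:(lra)). specialize (H3 b ltac:(lra)).
  rewrite Rplus_0_l, exp_0 in H1. rewrite Rplus_0_l, cos_0 in H2. rewrite Rplus_0_l, sin_0 in H3.
  eapply Rle_trans. apply Cmod_le_sum. unfold Cexp; simpl.
  set (ea := exp a) in *. set (cb := cos b) in *. set (sb := sin b) in *.
  assert (Hc: Rabs cb <= 1) by (apply Rabs_le; split; apply COS_bound).
  assert (Hs: Rabs sb <= 2 * Rabs b).
  { replace sb with ((sb - 0 - b * 1) + b) by ring. eapply Rle_trans. apply Rabs_triang.
    pose proof (Rabs_pos b). nra. }
  assert (Hea: Rabs (ea - 1) <= 2 * Rabs a).
  { replace (ea - 1) with ((ea - 1 - a * 1) + a) by ring. eapply Rle_trans. apply Rabs_triang.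
    pose proof (Rabs_pos a). nra. }
  assert (R1: Rabs (ea * cb - 1 - a) <= e/8 * Rabs a + 2 * (e/8 * Rabs b)).
  { replace (ea * cb - 1 - a) with ((ea - 1 - a * 1) * cb + (1 + a) * (cb - 1 - b * 0)) by ring.
    eapply Rle_trans. apply Rabs_triang. rewrite !Rabs_mult.
    assert (Rabs (1 + a) <= 2).
    { eapply Rle_trans. apply Rabs_triang. rewrite Rabs_R1. lra. }
    pose proof (Rabs_pos (ea - 1 - a * 1)); pose proof (Rabs_pos (cb - 1 - b * 0));
    pose proof (Rabs_pos (1 + a)); pose proof (Rabs_pos cb). nra. }
  assert (R2: Rabs (ea * sb - 0 - b) <= 2 * Rabs a * (2 * Rabs b) + e/8 * Rabs b).
  { replace (ea * sb - 0 - b) with ((ea - 1) * sb + (sb - 0 - b * 1)) by ring.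
    eapply Rle_trans. apply Rabs_triang. rewrite !Rabs_mult.
    pose proof (Rabs_pos (ea - 1)); pose proof (Rabs_pos sb). nra. }
  pose proof (Rabs_pos a); pose proof (Rabs_pos b).
  assert (Rabs a * Rabs b <= e/8 * ch) by nra.
  replace (ea * cb + - (1) + - a) with (ea * cb - 1 - a) by ring. replace (ea * sb + - 0 + - b) with (ea * sb - 0 - b) by ring. nra.
Qed.

Lemma Cexp_lin_deriv (c lam w : C) :
  is_derive (K:=C_AbsRing) (V:=C_NormedModule) (fun z => c * Cexp (lam * z))%C w (c * lam * Cexp (lam * w))%C.
Proof.
  apply Cderiv_eps. intros eps Heps.
  set (M := Cmod c * Cmod (Cexp (lam * w)) * Cmod lam + 1).
  assert (HM : 0 < M) by (unfold M; apply Rplus_le_lt_0_compat; [repeat apply Rmult_le_pos; apply Cmod_ge_0 | lra]).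
  destruct (Cexp_near0 (eps / M)) as [d [Hd H]]. apply Rdiv_lt_0_compat; lra.
  pose proof (Cmod_ge_0 lam).
  exists (d / (Cmod lam + 1)). split. apply Rdiv_lt_0_compat; lra.
  intros y Hy.
  replace (c * Cexp (lam * y) - c * Cexp (lam * w) - (y - w) * (c * lam * Cexp (lam * w)))%C
    with (c * Cexp (lam * w) * (Cexp (lam * (y - w)) - 1 - lam * (y - w)))%C.
  2: { replace (lam * y)%C with (lam * w + lam * (y - w))%C by ring. rewrite Cexp_add. ring. }
  rewrite !Cmod_mult.
  assert (Hl : Cmod (lam * (y - w)) < d).
  { rewrite Cmod_mult. pose proof (Cmod_ge_0 (y - w)).
    apply (Rmult_lt_compat_r (Cmod lam + 1)) in Hy; [|lra].
    unfold Rdiv in Hy. rewrite Rmult_assoc, Rinv_l, Rmult_1_r in Hy by lra. nra. }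
  specialize (H _ Hl). rewrite Cmod_mult in H.
  pose proof (Cmod_ge_0 c); pose proof (Cmod_ge_0 (Cexp (lam * w))); pose proof (Cmod_ge_0 (y - w)).
  set (A := Cmod c * Cmod (Cexp (lam * w))) in *.
  assert (HA : 0 <= A) by (unfold A; nra).
  apply Rle_trans with (A * (eps / M * (Cmod lam * Cmod (y - w)))).
  apply Rmult_le_compat_l; auto.
  unfold M. fold A. unfold Rdiv.
  assert (A * Cmod lam <= A * Cmod lam + 1) by lra.
  assert (Hu : 0 <= A * Cmod lam) by (apply Rmult_le_pos; auto).
  set (u := A * Cmod lam) in *.
  replace (A * (eps * / (u + 1) * (Cmod lam * Cmod (y - w)))) with (eps * Cmod (y - w) * (u / (u + 1))) by (unfold u in *; field; lra).
  assert (u / (u+1) <= 1). { apply Rmult_le_reg_r with (u+1). nra. unfold Rdiv. rewrite Rmult_assoc, Rinv_l by nra. nra. }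
  rewrite <- (Rmult_1_r (eps * Cmod (y - w))) at 2. apply Rmult_le_compat_l; auto. apply Rmult_le_pos; lra.
Qed.

Lemma C_lim_eps (u : nat -> C) l : filterlim u eventually (locally l) <->
  forall eps, 0 < eps -> exists N, forall n, (N <= n)%nat -> Cmod (u n - l)%C < eps.
Proof.
  split.
  - intros H eps Heps. assert (He2 : 0 < eps / 2) by lra.
    destruct (proj1 (filterlim_locally (F := eventually) u l) H (mkposreal _ He2)) as [N HN].
    exists N. intros n Hn. specialize (HN n Hn). destruct HN as [H1 H2]. simpl in H1, H2.
    eapply Rle_lt_trans. apply Cmod_le_sum.
    change (Rabs (fst (u n) + - fst l) < eps/2) in H1.
    change (Rabs (snd (u n) + - snd l) < eps/2) in H2. simpl. lra.
  - intros H. apply (proj2 (filterlim_locally (F := eventually) u l)). intros eps.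
    destruct (H eps (cond_pos eps)) as [N HN]. exists N. intros n Hn. specialize (HN n Hn).
    pose proof (Cmod_fst (u n - l)%C). pose proof (Cmod_snd (u n - l)%C).
    split; simpl in H0, H1.
    change (Rabs (fst (u n) + - fst l) < eps). lra.
    change (Rabs (snd (u n) + - snd l) < eps). lra.
Qed.

Lemma R_lim_eps (u : nat -> R) l : filterlim u eventually (locally l) <->
  forall eps, 0 < eps -> exists N, forall n, (N <= n)%nat -> Rabs (u n - l) < eps.
Proof.
  split.
  - intros H eps Heps.
    destruct (proj1 (filterlim_locally (F := eventually) u l) H (mkposreal _ Heps)) as [N HN].
    exists N. intros n Hn. apply (HN n Hn).
  - intros H. apply (proj2 (filterlim_locally (F := eventually) u l)). intros eps.
    destruct (H eps (cond_pos eps)) as [N HN]. exists N. intros n Hn. apply (HN n Hn).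
Qed.

Lemma sum_n_fst (a : nat -> C) N : fst (sum_n a N) = sum_n (fun n => fst (a n)) N.
Proof. induction N. rewrite !sum_O; auto. rewrite !sum_Sn.
  change (fst (sum_n a N) + fst (a (S N)) = sum_n (fun n => fst (a n)) N + fst (a (S N))). rewrite IHN. reflexivity. Qed.

Lemma sum_n_snd (a : nat -> C) N : snd (sum_n a N) = sum_n (fun n => snd (a n)) N.
Proof. induction N. rewrite !sum_O; auto. rewrite !sum_Sn.
  change (snd (sum_n a N) + snd (a (S N)) = sum_n (fun n => snd (a n)) N + snd (a (S N))). rewrite IHN. reflexivity. Qed.

Lemma Cmod_sum_n (a : nat -> C) N : Cmod (sum_n a N) <= sum_n (fun n => Cmod (a n)) N.
Proof.
  induction N. rewrite !sum_O; lra. rewrite !sum_Sn.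
  change (plus (sum_n a N) (a (S N))) with (sum_n a N + a (S N))%C.
  eapply Rle_trans. apply Cmod_triangle. change (plus (sum_n (fun n : nat => Cmod (a n)) N) (Cmod (a (S N))))
   with (sum_n (fun n : nat => Cmod (a n)) N + Cmod (a (S N))). lra.
Qed.

Lemma sum_n_le_R (a b : nat -> R) N : (forall n, a n <= b n) -> sum_n a N <= sum_n b N.
Proof.
  intros H. induction N. rewrite !sum_O; auto. rewrite !sum_Sn.
  change (sum_n a N + a (S N) <= sum_n b N + b (S N)). specialize (H (S N)). lra.
Qed.

Lemma ex_series_comp_abs (a : nat -> C) (p : C -> R) : (forall z, Rabs (p z) <= Cmod z) ->
  ex_series (fun n => Cmod (a n)) -> ex_series (fun n => p (a n)).
Proof.
  intros Hp H. apply ex_series_Rabs.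
  apply (ex_series_le (K:=R_AbsRing) (V:=R_CompleteNormedModule) _ (fun n => Cmod (a n))); auto.
  intros n. change (Rabs (Rabs (p (a n))) <= Cmod (a n)). rewrite Rabs_Rabsolu. auto.
Qed.

Lemma Cseries_is (a : nat -> C) : ex_series (fun n => Cmod (a n)) ->
  is_series (K:=C_AbsRing) (V:=C_NormedModule) a (Cseries a).
Proof.
  intros H.
  pose proof (Series_correct _ (ex_series_comp_abs a fst Cmod_fst H)) as H1.
  pose proof (Series_correct _ (ex_series_comp_abs a snd Cmod_snd H)) as H2.
  unfold is_series in *. apply C_lim_eps. intros eps Heps.
  destruct (proj1 (R_lim_eps _ _) H1 (eps/2) ltac:(lra)) as [N1 HN1].
  destruct (proj1 (R_lim_eps _ _) H2 (eps/2) ltac:(lra)) as [N2 HN2].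
  exists (max N1 N2). intros n Hn.
  specialize (HN1 n ltac:(lia)). specialize (HN2 n ltac:(lia)).
  eapply Rle_lt_trans. apply Cmod_le_sum. unfold Cseries, Cminus, Cplus, Copp. cbn beta. cbn [fst snd].
  rewrite sum_n_fst, sum_n_snd.
  replace (sum_n (fun n0 : nat => fst (a n0)) n + - Series (fun m : nat => fst (a m)))
    with (sum_n (fun n0 : nat => fst (a n0)) n - Series (fun m : nat => fst (a m))) by ring.
  replace (sum_n (fun n0 : nat => snd (a n0)) n + - Series (fun m : nat => snd (a m)))
    with (sum_n (fun n0 : nat => snd (a n0)) n - Series (fun m : nat => snd (a m))) by ring.
  replace eps with (eps/2 + eps/2) by field. apply Rplus_lt_compat; [exact HN1 | exact HN2].
Qed.

Lemma is_series_C_unique (a : nat -> C) l l' :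
  is_series (K:=C_AbsRing) (V:=C_NormedModule) a l ->
  is_series (K:=C_AbsRing) (V:=C_NormedModule) a l' -> l = l'.
Proof.
  unfold is_series. rewrite !C_lim_eps. intros H1 H2.
  assert (forall eps, 0 < eps -> Cmod (l - l') < eps).
  { intros eps Heps. destruct (H1 (eps/2) ltac:(lra)) as [N1 HN1].
    destruct (H2 (eps/2) ltac:(lra)) as [N2 HN2].
    specialize (HN1 (max N1 N2) ltac:(lia)). specialize (HN2 (max N1 N2) ltac:(lia)).
    assert (A1 : Cmod (sum_n a (max N1 N2) - l) < eps/2) by exact HN1.
    assert (A2 : Cmod (sum_n a (max N1 N2) - l') < eps/2) by exact HN2. clear HN1 HN2.
    replace (l - l')%C with ((sum_n a (max N1 N2) - l') - (sum_n a (max N1 N2) - l))%C by ring.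
    eapply Rle_lt_trans. unfold Cminus at 1. apply Cmod_triangle. rewrite Cmod_opp. lra. }
  assert (Cmod (l - l') = 0).
  { destruct (Cmod_ge_0 (l - l')) as [Hp|Hp]; auto. specialize (H _ Hp). lra. }
  apply Cmod_eq_0 in H0. change (@eq C l l'). replace l with ((l - l') + l')%C by ring. rewrite H0. ring.
Qed.

Lemma Cseries_unique (a : nat -> C) l : is_series (K:=C_AbsRing) (V:=C_NormedModule) a l ->
  ex_series (fun n => Cmod (a n)) -> Cseries a = l.
Proof. intros H1 H2. apply (is_series_C_unique a); auto. apply Cseries_is; auto. Qed.

Lemma Cseries_norm_le (a : nat -> C) l (b : nat -> R) lb :
  is_series (K:=C_AbsRing) (V:=C_NormedModule) a l -> (forall n, Cmod (a n) <= b n) ->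
  is_series b lb -> Cmod l <= lb.
Proof.
  unfold is_series. rewrite C_lim_eps, R_lim_eps. intros H1 Hb H2.
  apply Rnot_lt_le. intros Hlt.
  set (eps := (Cmod l - lb) / 2). assert (Heps : 0 < eps) by (unfold eps; lra).
  destruct (H1 eps Heps) as [N1 HN1]. destruct (H2 eps Heps) as [N2 HN2].
  specialize (HN1 (max N1 N2) ltac:(lia)). specialize (HN2 (max N1 N2) ltac:(lia)).
  set (N := max N1 N2) in *.
  assert (A1 : Cmod (sum_n a N - l) < eps) by exact HN1.
  assert (A2 : Rabs (sum_n b N - lb) < eps) by exact HN2. clear HN1 HN2.
  pose proof (Cmod_sum_n a N). pose proof (sum_n_le_R _ _ N Hb).
  assert (Cmod l <= Cmod (sum_n a N) + Cmod (sum_n a N - l)).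
  { replace l with (sum_n a N - (sum_n a N - l))%C at 1 by ring. unfold Cminus at 1.
    eapply Rle_trans. apply Cmod_triangle. rewrite Cmod_opp. lra. }
  apply Rabs_def2 in A2. unfold eps in *. lra.
Qed.

Lemma path_deriv (g g' : C -> C) (pr : C -> R) w0 h s :
  (forall z, Rabs (pr z) <= Cmod z) ->
  (forall a b c (r : R), pr (a - b - RtoC r * c)%C = pr a - pr b - r * pr c) ->
  is_derive (K:=C_AbsRing) (V:=C_NormedModule) g (w0 + RtoC s * h)%C (g' (w0 + RtoC s * h)%C) ->
  is_derive (fun t : R => pr (g (w0 + RtoC t * h)%C)) s (pr (h * g' (w0 + RtoC s * h))%C).
Proof.
  intros Hpr Hlin Hd. rewrite Cderiv_eps in Hd. apply Rderiv_eps. intros eps Heps.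
  pose proof (Cmod_ge_0 h).
  destruct (Hd (eps / (Cmod h + 1))) as [d [Hd0 Hd1]]. apply Rdiv_lt_0_compat; lra.
  exists (d / (Cmod h + 1)). split. apply Rdiv_lt_0_compat; lra.
  intros t Ht.
  set (p := (w0 + RtoC s * h)%C) in *.
  assert (Hy : ((w0 + RtoC t * h) - p = RtoC (t - s) * h)%C) by (unfold p; rewrite RtoC_minus; ring).
  specialize (Hd1 (w0 + RtoC t * h)%C). rewrite Hy in Hd1. rewrite Cmod_mult, Cmod_R in Hd1.
  assert (Hlt : Rabs (t - s) * Cmod h < d).
  { apply (Rmult_lt_compat_r (Cmod h + 1)) in Ht; [|lra].
    unfold Rdiv in Ht. rewrite Rmult_assoc, Rinv_l, Rmult_1_r in Ht by lra.
    pose proof (Rabs_pos (t - s)). nra. }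
  specialize (Hd1 Hlt).
  rewrite <- Hlin.
  replace (RtoC (t - s) * (h * g' p))%C with (RtoC (t - s) * h * g' p)%C by ring.
  eapply Rle_trans. apply Hpr. eapply Rle_trans. apply Hd1.
  pose proof (Rabs_pos (t - s)).
  unfold Rdiv. 
  replace (eps * / (Cmod h + 1) * (Rabs (t - s) * Cmod h)) with (eps * Rabs (t - s) * (Cmod h / (Cmod h + 1))) by (field; lra).
  assert (Cmod h / (Cmod h + 1) <= 1).
  { apply Rmult_le_reg_r with (Cmod h + 1). lra. unfold Rdiv. rewrite Rmult_assoc, Rinv_l by lra. lra. }
  rewrite <- (Rmult_1_r (eps * Rabs (t - s))) at 2. apply Rmult_le_compat_l; auto.
  apply Rmult_le_pos; lra.
Qed.

Lemma C_MV_comp (g g' : C -> C) (pr : C -> R) w0 d M :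
  (forall z, Rabs (pr z) <= Cmod z) ->
  (forall a b c (r : R), pr (a - b - RtoC r * c)%C = pr a - pr b - r * pr c) ->
  (forall y, Cmod (y - w0) < d -> is_derive (K:=C_AbsRing) (V:=C_NormedModule) g y (g' y) /\ Cmod (g' y) <= M) ->
  forall h, Cmod h < d -> Rabs (pr (g (w0 + h)%C) - pr (g w0)) <= M * Cmod h.
Proof.
  intros Hpr Hlin H h Hh.
  assert (Hin : forall x, 0 <= x <= 1 -> Cmod ((w0 + RtoC x * h) - w0) < d).
  { intros x Hx. replace ((w0 + RtoC x * h) - w0)%C with (RtoC x * h)%C by ring.
    rewrite Cmod_mult, Cmod_R, Rabs_right by lra. pose proof (Cmod_ge_0 h). nra. }
  destruct (MVT_gen (fun t : R => pr (g (w0 + RtoC t * h)%C)) 0 1 (fun t => pr (h * g' (w0 + RtoC t * h))%C)) as [c [Hc Heq]].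
  - intros x Hx. rewrite Rmin_left, Rmax_right in Hx by lra.
    apply path_deriv; auto. apply H. apply Hin. lra.
  - intros x Hx. rewrite Rmin_left, Rmax_right in Hx by lra.
    apply continuity_pt_filterlim. apply (ex_derive_continuous (K:=R_AbsRing) (V:=R_NormedModule)).
    eexists. apply path_deriv; auto. apply H. apply Hin. lra.
  - rewrite Rmin_left, Rmax_right in Hc by lra.
    replace (w0 + RtoC 1 * h)%C with (w0 + h)%C in Heq by ring.
    replace (w0 + RtoC 0 * h)%C with w0 in Heq by ring.
    rewrite Heq, Rminus_0_r, Rmult_1_r.
    eapply Rle_trans. apply Hpr. rewrite Cmod_mult.
    destruct (H _ (Hin c Hc)) as [_ HM]. pose proof (Cmod_ge_0 h). 
    rewrite Rmult_comm. apply Rmult_le_compat_r; auto.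
Qed.

Lemma C_MV (g g' : C -> C) w0 d M :
  (forall y, Cmod (y - w0) < d -> is_derive (K:=C_AbsRing) (V:=C_NormedModule) g y (g' y) /\ Cmod (g' y) <= M) ->
  forall h, Cmod h < d -> Cmod (g (w0 + h)%C - g w0) <= 2 * M * Cmod h.
Proof.
  intros H h Hh.
  pose proof (C_MV_comp g g' fst w0 d M Cmod_fst ltac:(intros; simpl; ring) H h Hh).
  pose proof (C_MV_comp g g' snd w0 d M Cmod_snd ltac:(intros; simpl; ring) H h Hh).
  eapply Rle_trans. apply Cmod_le_sum. simpl.
  replace (fst (g (w0 + h)%C) + - fst (g w0)) with (fst (g (w0 + h)%C) - fst (g w0)) by ring.
  replace (snd (g (w0 + h)%C) + - snd (g w0)) with (snd (g (w0 + h)%C) - snd (g w0)) by ring.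
  lra.
Qed.

Lemma sum_n_le_R' (a b : nat -> R) N : (forall n, (n <= N)%nat -> a n <= b n) -> sum_n a N <= sum_n b N.
Proof.
  intros H. induction N. rewrite !sum_O; auto. rewrite !sum_Sn.
  change (sum_n a N + a (S N) <= sum_n b N + b (S N)).
  assert (sum_n a N <= sum_n b N) by (apply IHN; intros; apply H; lia).
  specialize (H (S N) (le_n _)). lra.
Qed.

Lemma delta_finite (P : nat -> R -> Prop) K :
  (forall n, (n < K)%nat -> exists d, 0 < d /\ forall h, h < d -> P n h) ->
  exists d, 0 < d /\ forall n, (n < K)%nat -> forall h, h < d -> P n h.
Proof.
  induction K; intros H.
  - exists 1. split. lra. intros n Hn. lia.
  - destruct IHK as [d1 [Hd1 H1]]. intros n Hn. apply H. lia.
    destruct (H K (Nat.lt_succ_diag_r K)) as [d2 [Hd2 H2]].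
    exists (Rmin d1 d2). split. apply Rmin_pos; auto.
    intros n Hn h Hh. destruct (Nat.eq_dec n K) as [->|Hne].
    + apply H2. pose proof (Rmin_r d1 d2). lra.
    + apply H1. lia. pose proof (Rmin_l d1 d2). lra.
Qed.

Lemma series_deriv (g g' : nat -> C -> C) (G : C -> C) (M : nat -> R) w0 d D :
  0 < d ->
  (forall n y, Cmod (y - w0) < d -> is_derive (K:=C_AbsRing) (V:=C_NormedModule) (g n) y (g' n y) /\ Cmod (g' n y) <= M n) ->
  ex_series M ->
  (forall y, Cmod (y - w0) < d -> is_series (K:=C_AbsRing) (V:=C_NormedModule) (fun n => g n y) (G y)) ->
  is_series (K:=C_AbsRing) (V:=C_NormedModule) (fun n => g' n w0) D ->
  is_derive (K:=C_AbsRing) (V:=C_NormedModule) G w0 D.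
Proof.
  intros Hd Hg HM HG HD. apply Cderiv_eps. intros eps Heps.
  pose proof (Series_correct _ HM) as HSM. set (SM := Series M) in *.
  destruct (proj1 (R_lim_eps _ _) HSM (eps/16) ltac:(lra)) as [N0 HN0].
  specialize (HN0 N0 (le_n _)).
  assert (HN0' : Rabs (sum_n M N0 - SM) < eps/16) by exact HN0. clear HN0.
  set (K := S N0).
  assert (HK : 0 < INR K) by (apply lt_0_INR; unfold K; lia).
  set (e' := eps / (2 * INR K)).
  assert (He' : 0 < e') by (unfold e'; apply Rdiv_lt_0_compat; lra).
  destruct (delta_finite (fun n h => forall z, Cmod z = h -> Cmod (g n (w0 + z) - g n w0 - z * g' n w0)%C <= e' * Cmod z) K)
    as [d0 [Hd0 H0]].
  { intros n Hn. destruct (Hg n w0) as [Hder _]. replace (w0 - w0)%C with (RtoC 0) by ring. rewrite Cmod_0. auto.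
    rewrite Cderiv_eps in Hder. destruct (Hder e' He') as [d1 [Hd1 H1]].
    exists d1. split; auto. intros h Hh z Hz. specialize (H1 (w0 + z)%C).
    replace (w0 + z - w0)%C with z in H1 by ring. apply H1. lra. }
  exists (Rmin d d0). split. apply Rmin_pos; auto.
  intros y Hy. set (h := (y - w0)%C) in *.
  assert (Hyh : y = (w0 + h)%C) by (unfold h; ring). rewrite Hyh.
  pose proof (Rmin_l d d0); pose proof (Rmin_r d d0).
  set (a := fun n => (g n (w0 + h) - g n w0 - h * g' n w0)%C).
  assert (Ha : is_series (K:=C_AbsRing) (V:=C_NormedModule) a (G (w0 + h) - G w0 - h * D)%C).
  { assert (Hy1 : Cmod (w0 + h - w0) < d) by (replace (w0 + h - w0)%C with h by ring; lra).
    assert (Hy2 : Cmod (w0 - w0) < d) by (replace (w0 - w0)%C with (RtoC 0) by ring; rewrite Cmod_0; lra).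
    pose proof (is_series_minus _ _ _ _ (HG (w0 + h)%C Hy1) (HG w0 Hy2)) as Hs1.
    pose proof (is_series_minus _ _ _ _ Hs1 (is_series_scal_l h _ _ HD)) as H2.
    exact H2. }
  assert (Hbound : forall n, Cmod (a n) <= 3 * M n * Cmod h).
  { intros n. unfold a.
    pose proof (C_MV (g n) (g' n) w0 d (M n) (Hg n) h ltac:(lra)).
    destruct (Hg n w0) as [_ HM0]. replace (w0 - w0)%C with (RtoC 0) by ring. rewrite Cmod_0. auto.
    unfold Cminus at 1. eapply Rle_trans. apply Cmod_triangle. rewrite Cmod_opp, Cmod_mult.
    pose proof (Cmod_ge_0 h). nra. }
  set (L := (G (w0 + h) - G w0 - h * D)%C) in *.
  set (S := sum_n a N0).
  assert (Htail : is_series (K:=C_AbsRing) (V:=C_NormedModule) (fun k => a (K + k)%nat) (L - S)%C).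
  { apply (is_series_incr_n a K). unfold K; lia. simpl pred.
    match goal with |- is_series _ ?x => replace x with L end. exact Ha.
    change (L = (L - S + S)%C). unfold S. ring. }
  assert (HtailM : is_series (fun k => M (K + k)%nat) (SM - sum_n M N0)).
  { apply (is_series_incr_n M K). unfold K; lia. simpl pred.
    match goal with |- is_series _ ?x => replace x with SM end. exact HSM.
    change (SM = SM - sum_n M N0 + sum_n M N0). ring. }
  pose proof (is_series_scal_l (3 * Cmod h) _ _ HtailM) as Hb.
  assert (HT' : Cmod (L - S)%C <= 3 * Cmod h * (SM - sum_n M N0)).
  { apply (Cseries_norm_le _ _ (fun k => 3 * M (K+k)%nat * Cmod h) _ Htail (fun k => Hbound (K + k)%nat)).
    eapply is_series_ext; [|exact Hb]. intros n. simpl. change (3 * Cmod h * M (K + n)%nat = 3 * M (K + n)%nat * Cmod h). ring. }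
  assert (HS : Cmod S <= eps / 2 * Cmod h).
  { unfold S. eapply Rle_trans. apply Cmod_sum_n.
    eapply Rle_trans. apply (sum_n_le_R' _ (fun _ => e' * Cmod h)).
    intros n Hn. unfold a. apply (H0 n ltac:(unfold K; lia) (Cmod h)); [lra | reflexivity].
    rewrite sum_n_const. fold K. unfold e'. right. field. lra. }
  replace L with (S + (L - S))%C by ring.
  eapply Rle_trans. apply Cmod_triangle.
  apply Rabs_def2 in HN0'. destruct HN0' as [_ HN0']. pose proof (Cmod_ge_0 h).
  assert (3 * Cmod h * (SM - sum_n M N0) <= 3 * Cmod h * (eps / 16)).
  { apply Rmult_le_compat_l. lra. lra. }
  nra.
Qed.

Lemma exp_le_mono x y : x <= y -> exp x <= exp y.
Proof. intros [H|H]. left; apply exp_increasing; auto. subst; lra. Qed.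

Lemma exp_INR_mult n x : exp (INR n * x) = exp x ^ n.
Proof.
  induction n. simpl. rewrite Rmult_0_l, exp_0. auto.
  rewrite S_INR, Rmult_plus_distr_r, Rmult_1_l, exp_plus, IHn. simpl. ring.
Qed.

Lemma n_q_pow (q : R) n : 0 <= q < 1 -> INR n * q ^ n <= / (1 - q).
Proof.
  intros Hq.
  assert (H : INR n * q ^ n * (1 - q) <= 1 - q ^ n).
  { induction n. simpl. lra.
    rewrite S_INR. simpl.
    assert (0 <= q ^ n) by (apply pow_le; lra).
    assert (q ^ n <= 1) by (rewrite <- (pow1 n); apply pow_incr; lra).
    assert (q * (INR n * q^n * (1-q)) <= q * (1 - q^n)) by (apply Rmult_le_compat_l; lra).
    assert (0 <= (1-q) * (1 - q * q^n)) by (apply Rmult_le_pos; nra).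
    nra. }
  assert (0 <= q ^ n) by (apply pow_le; lra).
  apply Rmult_le_reg_r with (1 - q). lra. rewrite Rinv_l by lra. lra.
Qed.

Definition lam (g : R) (mu k m : nat) : C := (RtoC (INR k) + Ci * RtoC (g * (INR m - INR (k * mu))))%C.
Definition trm (g : R) (mu : nat) (th : nat -> nat -> C) k m (w : C) : C := (th k m * Cexp (lam g mu k m * w))%C.
Definition trm' (g : R) (mu : nat) (th : nat -> nat -> C) k m (w : C) : C := (th k m * lam g mu k m * Cexp (lam g mu k m * w))%C.
Definition Pk g mu th k w := Cseries (fun m => trm g mu th k m w).
Definition Pk' g mu th k w := Cseries (fun m => trm' g mu th k m w).
Definition Gf g mu th w := Cseries (fun k => Pk g mu th k w).
Definition Amk (r RR : R) (mu : nat) (th : nat -> nat -> C) k m := Cmod (th k m) * exp (INR m * ln RR - INR (k * mu) * ln r).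

Lemma fst_lam_w g mu k m w : fst (lam g mu k m * w)%C = INR k * fst w + (INR m - INR (k * mu)) * (- g * snd w).
Proof. destruct w as [w1 w2]. unfold lam. simpl. ring. Qed.

Lemma Cexp_lam_bound g mu k m w s1 a b : fst w <= s1 -> a <= - g * snd w <= b ->
  Cmod (Cexp (lam g mu k m * w)) <= exp (INR k * s1 + INR m * b - INR (k * mu) * a).
Proof.
  intros H1 [H2 H3]. rewrite Cmod_Cexp, fst_lam_w. apply exp_le_mono.
  pose proof (pos_INR k); pose proof (pos_INR m); pose proof (pos_INR (k * mu)). nra.
Qed.

Lemma Cmod_lam g mu k m : Cmod (lam g mu k m) <= INR k * (1 + Rabs g * INR mu) + Rabs g * INR m.
Proof.
  unfold lam. eapply Rle_trans. apply Cmod_triangle. rewrite Cmod_mult, Cmod_Ci, !Cmod_R.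
  rewrite Rabs_right by (apply Rle_ge, pos_INR). rewrite Rabs_mult, mult_INR.
  pose proof (pos_INR k); pose proof (pos_INR m); pose proof (pos_INR mu).
  assert (Rabs (INR m - INR k * INR mu) <= INR m + INR k * INR mu).
  { apply Rabs_le. nra. }
  pose proof (Rabs_pos g). nra.
Qed.

Lemma trm_bound r RR g mu th k m w s1 a b : 0 < r -> 0 < RR ->
  fst w <= s1 -> s1 <= 0 -> ln r <= a -> a <= - g * snd w <= b -> b <= ln RR ->
  Cmod (trm g mu th k m w) <= Amk r RR mu th k m.
Proof.
  intros Hr HR H1 H2 H3 H4 H5. unfold trm, Amk. rewrite Cmod_mult.
  apply Rmult_le_compat_l. apply Cmod_ge_0.
  eapply Rle_trans. apply (Cexp_lam_bound g mu k m w s1 a b); auto. apply exp_le_mono.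
  pose proof (pos_INR k); pose proof (pos_INR m); pose proof (pos_INR (k * mu)). nra.
Qed.

Lemma trm'_bound r RR g mu th k m w s1 a b : 0 < r -> 0 < RR ->
  fst w <= s1 -> s1 < 0 -> ln r <= a -> a <= - g * snd w <= b -> b < ln RR ->
  Cmod (trm' g mu th k m w) <=
   ((1 + Rabs g * INR mu) * / (1 - exp s1) + Rabs g * / (1 - exp (b - ln RR))) * Amk r RR mu th k m.
Proof.
  intros Hr HR H1 H2 H3 H4 H5. unfold trm', Amk. rewrite !Cmod_mult.
  pose proof (Cmod_ge_0 (th k m)). pose proof (Cmod_lam g mu k m).
  pose proof (Cexp_lam_bound g mu k m w s1 a b H1 H4).
  pose proof (Cmod_ge_0 (lam g mu k m)). pose proof (Cmod_ge_0 (Cexp (lam g mu k m * w))).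
  pose proof (pos_INR k); pose proof (pos_INR m); pose proof (pos_INR (k * mu)); pose proof (pos_INR mu).
  pose proof (Rabs_pos g).
  assert (Hq1 : 0 <= exp s1 < 1). { split. left; apply exp_pos. rewrite <- exp_0. apply exp_increasing; lra. }
  assert (Hq2 : 0 <= exp (b - ln RR) < 1). { split. left; apply exp_pos. rewrite <- exp_0. apply exp_increasing; lra. }
  pose proof (n_q_pow _ k Hq1) as C2. pose proof (n_q_pow _ m Hq2) as C1.
  rewrite <- exp_INR_mult in C1, C2.
  set (E := exp (INR m * ln RR - INR (k * mu) * ln r)).
  assert (Hsplit : exp (INR k * s1 + INR m * b - INR (k * mu) * a) <= exp (INR k * s1) * exp (INR m * (b - ln RR)) * E).
  { unfold E. rewrite <- !exp_plus. apply exp_le_mono. nra. }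
  assert (Hek : exp (INR k * s1) <= 1). { rewrite <- exp_0. apply exp_le_mono. nra. }
  assert (Hem : exp (INR m * (b - ln RR)) <= 1). { rewrite <- exp_0. apply exp_le_mono. nra. }
  assert (0 < E) by apply exp_pos.
  assert (0 < exp (INR k * s1)) by apply exp_pos. assert (0 < exp (INR m * (b - ln RR))) by apply exp_pos.
  set (C := Cmod (th k m)) in *. set (L := Cmod (lam g mu k m)) in *. set (X := Cmod (Cexp (lam g mu k m * w))) in *.
  set (u := exp (INR k * s1)) in *. set (v := exp (INR m * (b - ln RR))) in *.
  assert (HX : X <= u * v * E) by lra.
  assert (HLX : L * X <= (INR k * (1 + Rabs g * INR mu) + Rabs g * INR m) * (u * v * E)).
  { apply Rmult_le_compat; auto. }
  assert (Hk : INR k * u <= / (1 - exp s1)) by lra.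
  assert (Hm : INR m * v <= / (1 - exp (b - ln RR))) by lra.
  assert ((INR k * (1 + Rabs g * INR mu) + Rabs g * INR m) * (u * v * E) <=
     ((1 + Rabs g * INR mu) * / (1 - exp s1) + Rabs g * / (1 - exp (b - ln RR))) * E).
  { assert (0 <= Rabs g * INR mu) by nra.
    replace ((INR k * (1 + Rabs g * INR mu) + Rabs g * INR m) * (u * v * E)) with
       ((1 + Rabs g * INR mu) * (INR k * u) * v * E + Rabs g * (INR m * v) * u * E) by ring.
    assert ((1 + Rabs g * INR mu) * (INR k * u) * v * E <= (1 + Rabs g * INR mu) * / (1 - exp s1) * E).
    { apply Rmult_le_compat_r. lra. 
      replace ((1 + Rabs g * INR mu) * / (1 - exp s1)) with ((1 + Rabs g * INR mu) * / (1 - exp s1) * 1) by ring.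
      assert (0 <= INR k * u) by nra.
      apply Rmult_le_compat; try nra. }
    assert (Rabs g * (INR m * v) * u * E <= Rabs g * / (1 - exp (b - ln RR)) * E).
    { apply Rmult_le_compat_r. lra.
      replace (Rabs g * / (1 - exp (b - ln RR))) with (Rabs g * / (1 - exp (b - ln RR)) * 1) by ring.
      assert (0 <= INR m * v) by nra.
      apply Rmult_le_compat; try nra. }
    lra. }
  rewrite Rmult_assoc.
  replace (((1 + Rabs g * INR mu) * / (1 - exp s1) + Rabs g * / (1 - exp (b - ln RR))) * (C * E))
    with (C * (((1 + Rabs g * INR mu) * / (1 - exp s1) + Rabs g * / (1 - exp (b - ln RR))) * E)) by ring.
  apply Rmult_le_compat_l; auto. lra.
Qed.

Lemma Cseries_bound (a : nat -> C) (b : nat -> R) : (forall n, Cmod (a n) <= b n) -> ex_series b ->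
  is_series (K:=C_AbsRing) (V:=C_NormedModule) a (Cseries a) /\ Cmod (Cseries a) <= Series b.
Proof.
  intros H Hb.
  assert (Ha : ex_series (fun n => Cmod (a n))).
  { apply (ex_series_le (K:=R_AbsRing) (V:=R_CompleteNormedModule) _ b); auto.
    intros n. change (Rabs (Cmod (a n)) <= b n). rewrite Rabs_right. auto. apply Rle_ge, Cmod_ge_0. }
  pose proof (Cseries_is a Ha). split; auto.
  apply (Cseries_norm_le a _ b); auto. apply Series_correct; auto.
Qed.

Lemma ex_series_scal_R (c : R) (a : nat -> R) : ex_series a -> ex_series (fun n => c * a n).
Proof. intros [l H]. exists (c * l). apply (is_series_scal_l c a l H). Qed.

Lemma Series_scal_R (c : R) (a : nat -> R) : ex_series a -> Series (fun n => c * a n) = c * Series a.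
Proof. intros H. apply is_series_unique. apply (is_series_scal_l c a). apply Series_correct; auto. Qed.

Section GD.
Variables (r RR g : R) (mu : nat) (th : nat -> nat -> C).
Hypotheses (Hr : 0 < r) (HR : 0 < RR).
Hypothesis (HA : forall k, ex_series (Amk r RR mu th k)).
Hypothesis (HAs : ex_series (fun k => Series (Amk r RR mu th k))).

Lemma Pk_bound k y s1 a b : fst y <= s1 -> s1 <= 0 -> ln r <= a -> a <= - g * snd y <= b -> b <= ln RR ->
  is_series (K:=C_AbsRing) (V:=C_NormedModule) (fun m => trm g mu th k m y) (Pk g mu th k y) /\
  Cmod (Pk g mu th k y) <= Series (Amk r RR mu th k).
Proof.
  intros. apply Cseries_bound; auto. intros m. apply (trm_bound r RR g mu th k m y s1 a b); auto.
Qed.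

Lemma Gf_is y s1 a b : fst y <= s1 -> s1 <= 0 -> ln r <= a -> a <= - g * snd y <= b -> b <= ln RR ->
  is_series (K:=C_AbsRing) (V:=C_NormedModule) (fun k => Pk g mu th k y) (Gf g mu th y).
Proof.
  intros. apply (Cseries_bound _ (fun k => Series (Amk r RR mu th k))); auto.
  intros k. apply (Pk_bound k y s1 a b); auto.
Qed.

Lemma Gf_deriv w0 d s1 a b : 0 < d -> s1 < 0 -> ln r <= a -> b < ln RR ->
  (forall y, Cmod (y - w0) < d -> fst y <= s1 /\ a <= - g * snd y <= b) ->
  is_derive (K:=C_AbsRing) (V:=C_NormedModule) (Gf g mu th) w0 (Cseries (fun k => Pk' g mu th k w0)).
Proof.
  intros Hd Hs1 Ha Hb Hreg.
  set (Ct := (1 + Rabs g * INR mu) * / (1 - exp s1) + Rabs g * / (1 - exp (b - ln RR))).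
  assert (Hdk : forall k y, Cmod (y - w0) < d ->
     is_derive (K:=C_AbsRing) (V:=C_NormedModule) (Pk g mu th k) y (Pk' g mu th k y) /\
     Cmod (Pk' g mu th k y) <= Ct * Series (Amk r RR mu th k)).
  { intros k y Hy.
    assert (Hbd : forall z, Cmod (z - y) < d - Cmod (y - w0) -> forall m,
       is_derive (K:=C_AbsRing) (V:=C_NormedModule) (fun w => trm g mu th k m w) z (trm' g mu th k m z) /\
       Cmod (trm' g mu th k m z) <= Ct * Amk r RR mu th k m).
    { intros z Hz m. split.
      - unfold trm, trm'. apply Cexp_lin_deriv.
      - assert (Cmod (z - w0) < d).
        { replace (z - w0)%C with ((z - y) + (y - w0))%C by ring. eapply Rle_lt_trans. apply Cmod_triangle. lra. }
        destruct (Hreg z H) as [H1 H2].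
        apply (trm'_bound r RR g mu th k m z s1 a b); auto. }
    split.
    - apply (series_deriv (fun m w => trm g mu th k m w) (fun m w => trm' g mu th k m w) (Pk g mu th k)
              (fun m => Ct * Amk r RR mu th k m) y (d - Cmod (y - w0))).
      + lra.
      + intros m z Hz. apply Hbd; auto.
      + apply ex_series_scal_R; auto.
      + intros z Hz.
        assert (Cmod (z - w0) < d).
        { replace (z - w0)%C with ((z - y) + (y - w0))%C by ring. eapply Rle_lt_trans. apply Cmod_triangle. lra. }
        destruct (Hreg z H) as [H1 H2]. apply (Pk_bound k z s1 a b); auto. lra. lra.
      + unfold Pk'. apply (Cseries_bound _ (fun m => Ct * Amk r RR mu th k m)).
        intros m. apply Hbd. replace (y - y)%C with (RtoC 0) by ring. rewrite Cmod_0. lra.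
        apply ex_series_scal_R; auto.
    - rewrite <- Series_scal_R by auto. unfold Pk'. apply (Cseries_bound _ (fun m => Ct * Amk r RR mu th k m)).
      intros m. apply Hbd. replace (y - y)%C with (RtoC 0) by ring. rewrite Cmod_0. lra.
      apply ex_series_scal_R; auto. }
  apply (series_deriv (Pk g mu th) (Pk' g mu th) (Gf g mu th) (fun k => Ct * Series (Amk r RR mu th k)) w0 d); auto.
  - apply ex_series_scal_R; auto.
  - intros y Hy. destruct (Hreg y Hy) as [H1 H2]. apply (Gf_is y s1 a b); auto; lra.
  - apply (Cseries_bound _ (fun k => Ct * Series (Amk r RR mu th k))).
    intros k. apply Hdk. replace (w0 - w0)%C with (RtoC 0) by ring. rewrite Cmod_0. lra.
    apply ex_series_scal_R; auto.
Qed.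
End GD.

Definition Lg (z : C) : C := (ln (Cmod z), atan (snd z / fst z)).

Lemma Cmod_rev (z w : C) : Rabs (Cmod z - Cmod w) <= Cmod (z - w).
Proof.
  apply Rabs_le. split.
  - assert (Cmod w <= Cmod (w - z) + Cmod z).
    { replace w with ((w - z) + z)%C at 1 by ring. apply Cmod_triangle. }
    replace (w - z)%C with (- (z - w))%C in H by ring. rewrite Cmod_opp in H. lra.
  - assert (Cmod z <= Cmod (z - w) + Cmod w).
    { replace z with ((z - w) + w)%C at 1 by ring. apply Cmod_triangle. }
    lra.
Qed.

Lemma Lg_1 : Lg 1%C = 0%C.
Proof.
  unfold Lg. rewrite Cmod_1, ln_1. simpl. replace (0 / 1) with 0 by field. rewrite atan_0. reflexivity.
Qed.

Lemma near_small_ln : forall eps, 0 < eps -> exists d, 0 < d /\ forall h, Rabs h < d -> Rabs (ln (1 + h)) <= 2 * Rabs h.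
Proof.
  intros eps Heps. destruct (real_near ln 1 1) with (eps := 1) as [d [Hd H]].
  { pose proof (derivable_pt_lim_ln 1 Rlt_0_1). rewrite Rinv_1 in H. exact H. } lra.
  exists d. split; auto. intros h Hh. specialize (H h Hh). rewrite ln_1 in H.
  replace (ln (1 + h)) with ((ln (1 + h) - 0 - h * 1) + h) by ring.
  eapply Rle_trans. apply Rabs_triang. lra.
Qed.

Lemma near_small_atan : exists d, 0 < d /\ forall h, Rabs h < d -> Rabs (atan h) <= 2 * Rabs h.
Proof.
  destruct (real_near atan 0 1) with (eps := 1) as [d [Hd H]].
  { pose proof (derivable_pt_lim_atan 0). replace (/ (1 + 0 ^ 2)) with 1 in H by (simpl; field). exact H. } lra.
  exists d. split; auto. intros h Hh. specialize (H h Hh). rewrite Rplus_0_l, atan_0 in H.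
  replace (atan h) with ((atan h - 0 - h * 1) + h) by ring.
  eapply Rle_trans. apply Rabs_triang. lra.
Qed.

Lemma Lg_cont1 : forall eps, 0 < eps -> exists d, 0 < d /\ forall z, Cmod (z - 1) < d -> Cmod (Lg z) < eps.
Proof.
  intros eps Heps.
  destruct (near_small_ln 1 Rlt_0_1) as [d1 [Hd1 H1]].
  destruct near_small_atan as [d2 [Hd2 H2]].
  set (d := Rmin (Rmin d1 (d2 / 2)) (Rmin (1/2) (eps / 7))).
  assert (Hd : 0 < d) by (unfold d; repeat apply Rmin_pos; lra).
  assert (Hdd : d <= d1 /\ d <= d2 / 2 /\ d <= 1/2 /\ d <= eps / 7).
  { unfold d. pose proof (Rmin_l (Rmin d1 (d2 / 2)) (Rmin (1/2) (eps / 7))).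
    pose proof (Rmin_r (Rmin d1 (d2 / 2)) (Rmin (1/2) (eps / 7))).
    pose proof (Rmin_l d1 (d2/2)); pose proof (Rmin_r d1 (d2/2)).
    pose proof (Rmin_l (1/2) (eps/7)); pose proof (Rmin_r (1/2) (eps/7)). lra. }
  exists d. split; auto. intros [a b] Hz.
  pose proof (Cmod_fst ((a, b) - 1)%C) as Ha. pose proof (Cmod_snd ((a, b) - 1)%C) as Hb.
  change (Rabs (a + - 1) <= Cmod ((a, b) - 1)%C) in Ha. change (Rabs (b + - 0) <= Cmod ((a, b) - 1)%C) in Hb.
  replace (a + - 1) with (a - 1) in Ha by ring. replace (b + - 0) with b in Hb by ring.
  pose proof (Cmod_rev (a, b) 1%C) as Hc. rewrite Cmod_1 in Hc.
  assert (Ha' : 1/2 < a). { assert (Rabs (a - 1) < 1/2) by lra. apply Rabs_def2 in H. lra. }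
  assert (Hba : Rabs (b / a) <= 2 * Rabs b).
  { unfold Rdiv. rewrite Rabs_mult, Rabs_inv, (Rabs_right a) by lra.
    assert (/ a <= 2). { apply Rmult_le_reg_r with a. lra. rewrite Rinv_l by lra. lra. }
    assert (0 < / a) by (apply Rinv_0_lt_compat; lra). pose proof (Rabs_pos b). nra. }
  specialize (H1 (Cmod (a, b) - 1) ltac:(lra)). replace (1 + (Cmod (a, b) - 1)) with (Cmod (a, b)) in H1 by ring.
  specialize (H2 (b / a) ltac:(lra)).
  eapply Rle_lt_trans. apply Cmod_le_sum. unfold Lg. simpl fst. simpl snd. lra.
Qed.

Lemma Cexp_Lg z : 0 < fst z -> Cexp (Lg z) = z.
Proof.
  destruct z as [a b]. intros Ha. simpl in Ha. unfold Cexp, Lg. simpl fst. simpl snd.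
  assert (Hm : 0 < Cmod (a, b)).
  { pose proof (Cmod_fst (a, b)). simpl in H. rewrite Rabs_right in H by lra. lra. }
  rewrite exp_ln by auto. rewrite cos_atan, sin_atan.
  assert (Hs : sqrt (1 + (b / a)²) = Cmod (a, b) / a).
  { rewrite <- (sqrt_Rsqr (Cmod (a, b) / a)). f_equal. unfold Rsqr. 
    assert (Cmod (a, b) * Cmod (a, b) = a * a + b * b).
    { unfold Cmod. simpl. rewrite sqrt_sqrt. ring. nra. }
    assert (Heq : Cmod (a, b) / a * (Cmod (a, b) / a) = 1 + b / a * (b / a)).
    { replace (Cmod (a, b) / a * (Cmod (a, b) / a)) with (Cmod (a, b) * Cmod (a, b) / (a * a)) by (field; lra).
      rewrite H. field. lra. }
    lra.
    apply Rlt_le, Rdiv_lt_0_compat; lra. }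
  rewrite Hs. apply injective_projections; simpl; field; split; lra.
Qed.

Lemma Lg_deriv1 : forall eps, 0 < eps -> exists d, 0 < d /\ forall z, Cmod (z - 1) < d ->
  Cmod (Lg z - (z - 1)) <= eps * Cmod (z - 1).
Proof.
  intros eps Heps.
  set (e1 := Rmin (eps / 2) (1 / 2)).
  assert (He1 : 0 < e1) by (unfold e1; apply Rmin_pos; lra).
  assert (He1a : e1 <= eps / 2) by apply Rmin_l. assert (He1b : e1 <= 1/2) by apply Rmin_r.
  destruct (Cexp_near0 e1 He1) as [d1 [Hd1 H1]].
  destruct (Lg_cont1 d1 Hd1) as [d2 [Hd2 H2]].
  exists (Rmin d2 (1/2)). split. apply Rmin_pos; lra.
  intros z Hz. pose proof (Rmin_l d2 (1/2)); pose proof (Rmin_r d2 (1/2)).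
  assert (Hf : 0 < fst z).
  { pose proof (Cmod_fst (z - 1)%C). destruct z as [a b].
    change (Rabs (a + - 1) <= Cmod ((a, b) - 1)%C) in H3. simpl fst.
    replace (a + - 1) with (a - 1) in H3 by ring.
    assert (Rabs (a - 1) < 1/2) by lra. apply Rabs_def2 in H4. lra. }
  specialize (H1 (Lg z) (H2 z ltac:(lra))). rewrite Cexp_Lg in H1 by auto.
  set (k := Lg z) in *.
  replace (k - (z - 1))%C with (- (z - 1 - k))%C by ring. rewrite Cmod_opp.
  assert (Cmod k <= Cmod (z - 1) + Cmod (z - 1 - k)).
  { replace k with ((z - 1) - (z - 1 - k))%C at 1 by ring. unfold Cminus at 1. 
    eapply Rle_trans. apply Cmod_triangle. rewrite Cmod_opp. lra. }
  assert (Cmod k <= 2 * Cmod (z - 1)).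
  { pose proof (Cmod_ge_0 k). nra. }
  pose proof (Cmod_ge_0 k). nra.
Qed.

Lemma F_local_deriv (Gfun Fx : C -> C) (good : C -> Prop) w0 D :
  (exists e, 0 < e /\ forall w, Cmod (w - w0) < e -> good w) ->
  (forall w, good w -> Fx (Cexp w) = Gfun w) ->
  is_derive (K:=C_AbsRing) (V:=C_NormedModule) Gfun w0 D ->
  ex_derive (K:=C_AbsRing) (V:=C_NormedModule) Fx (Cexp w0).
Proof.
  intros [e [He Hgood]] HF HG.
  set (x := Cexp w0).
  assert (Hx : x <> 0%C) by apply Cexp_neq0.
  assert (Hxm : 0 < Cmod x).
  { destruct (Cmod_ge_0 x) as [H|H]; auto. symmetry in H. apply Cmod_eq_0 in H. contradiction. }
  set (H := fun y => (w0 + Lg (y * / x))%C).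
  assert (HHx : H x = w0).
  { unfold H. rewrite Cinv_r by auto. rewrite Lg_1. ring. }
  assert (Hdiv : forall y, Cmod (y * / x - 1) = Cmod (y - x) / Cmod x).
  { intros y. replace (y * / x - 1)%C with ((y - x) / x)%C by (field; auto). rewrite Cmod_div; auto. }
  assert (HdH : is_derive (K:=C_AbsRing) (V:=AbsRing_NormedModule C_AbsRing) H x (/ x)%C).
  { apply (deriv_eps (K:=C_AbsRing) (V:=AbsRing_NormedModule C_AbsRing)). intros eps Heps.
    destruct (Lg_deriv1 (eps * Cmod x) ltac:(nra)) as [d [Hd Hd1]].
    exists (d * Cmod x). split. nra.
    intros y Hy. change (Cmod (y - x) < d * Cmod x) in Hy.
    change (Cmod (H y - H x - (y - x) * / x)%C <= eps * Cmod (y - x)). rewrite HHx.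
    replace (H y - w0 - (y - x) * / x)%C with (Lg (y * / x) - (y * / x - 1))%C. 2:{ unfold H. cbv beta. field. auto. }
    assert (Cmod (y * / x - 1) < d).
    { rewrite Hdiv. apply Rmult_lt_reg_r with (Cmod x); auto. unfold Rdiv. rewrite Rmult_assoc, Rinv_l by lra. lra. }
    eapply Rle_trans. apply Hd1; auto. rewrite Hdiv.
    right. field. lra. }
  assert (Hcomp := is_derive_comp Gfun H x D (/ x)%C).
  rewrite HHx in Hcomp. specialize (Hcomp HG HdH).
  exists (scal (/ x)%C D).
  eapply is_derive_ext_loc; [|exact Hcomp].
  destruct (Lg_cont1 e He) as [d2 [Hd2 H2]].
  assert (Hd3 : 0 < Rmin d2 (1/2) * Cmod x) by (apply Rmult_lt_0_compat; auto; apply Rmin_pos; lra).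
  exists (mkposreal _ Hd3). intros y Hy. change (Cmod (y - x) < Rmin d2 (1/2) * Cmod x) in Hy.
  assert (Hz : Cmod (y * / x - 1) < Rmin d2 (1/2)).
  { rewrite Hdiv. apply Rmult_lt_reg_r with (Cmod x); auto. unfold Rdiv. rewrite Rmult_assoc, Rinv_l by lra. lra. }
  pose proof (Rmin_l d2 (1/2)); pose proof (Rmin_r d2 (1/2)).
  assert (Hf : 0 < fst (y * / x)%C).
  { pose proof (Cmod_fst (y * / x - 1)%C).
    replace (fst (y * / x - 1)%C) with (fst (y * / x)%C - 1) in H3 by (simpl; ring).
    assert (Rabs (fst (y * / x)%C - 1) < 1/2) by lra. apply Rabs_def2 in H4. lra. }
  assert (Hgw : good (H y)).
  { apply Hgood. unfold H. replace (w0 + Lg (y * / x) - w0)%C with (Lg (y * / x)) by ring. apply H2. lra. }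
  rewrite <- (HF _ Hgw). f_equal. unfold H. rewrite Cexp_add, Cexp_Lg by auto. fold x. field. auto.
Qed.

Lemma Amk_eq r RR mu th k m : 0 < r -> 0 < RR ->
  Amk r RR mu th k m = / r ^ (k * mu) * (Cmod (th k m) * RR ^ m).
Proof.
  intros Hr HR. unfold Amk. unfold Rminus. rewrite exp_plus, exp_Ropp, !exp_INR_mult, !exp_ln by auto. ring.
Qed.

Lemma good_unique alpha beta w w' : beta - alpha < 2 * PI ->
  alpha < snd w < beta -> alpha < snd w' < beta -> Cexp w = Cexp w' -> w = w'.
Proof.
  intros Hab H1 H2 He.
  assert (Hm : exp (fst w) = exp (fst w')) by (rewrite <- !Cmod_Cexp, He; auto).
  apply exp_inv in Hm.
  destruct w as [a b]; destruct w' as [a' b']. simpl in *. subst a'.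
  unfold Cexp in He. simpl in He. injection He as Hc Hs.
  pose proof (exp_pos a).
  assert (Hc' : cos b = cos b'). { apply Rmult_eq_reg_l with (exp a); auto; lra. }
  assert (Hs' : sin b = sin b'). { apply Rmult_eq_reg_l with (exp a); auto; lra. }
  set (d := (b - b') / 2).
  assert (Hcd : cos (2 * d) = 1).
  { unfold d. replace (2 * ((b - b') / 2)) with (b - b') by field. rewrite cos_minus, Hc', Hs'.
    pose proof (sin2_cos2 b'). unfold Rsqr in H0. lra. }
  rewrite cos_2a_sin in Hcd.
  assert (Hsd : sin d = 0) by nra.
  destruct (sin_eq_0_0 d Hsd) as [k Hk].
  assert (Hdb : - PI < d < PI) by (unfold d; split; lra).
  rewrite Hk in Hdb. pose proof PI_RGT_0.
  assert (Hk1 : -1 < IZR k < 1).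
  { split. apply Rmult_lt_reg_r with PI; lra. apply Rmult_lt_reg_r with PI; lra. }
  destruct Hk1 as [Hk1 Hk2]. apply lt_IZR in Hk1. apply lt_IZR in Hk2.
  assert (k = 0%Z) by lia. subst k. simpl in Hk. 
  assert (b = b') by (unfold d in Hk; lra). subst; auto.
Qed.

Lemma Cpow_Cexp u n : Defs.Cpow (Cexp u) n = Cexp (RtoC (INR n) * u)%C.
Proof.
  induction n. simpl. replace (RtoC 0 * u)%C with (RtoC 0) by ring. rewrite Cexp_0. reflexivity.
  simpl Defs.Cpow. rewrite IHn, <- Cexp_add. f_equal. rewrite S_INR, RtoC_plus. ring.
Qed.

Lemma polarC_Cexp rho phi : 0 < rho -> polarC rho phi = Cexp (ln rho, phi).
Proof. intros H. unfold polarC, Cexp. simpl. rewrite exp_ln; auto. Qed.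

Lemma xig_Cexp g rho phi : xig g rho phi = Cexp (Ci * RtoC g * (ln rho, phi))%C.
Proof.
  unfold xig, Cexp. simpl. apply injective_projections; simpl.
  - f_equal. f_equal. ring. f_equal. ring.
  - f_equal. f_equal. ring. f_equal. ring.
Qed.

Lemma Oeval_Pk RR g mu th k rho phi : 0 < rho -> 0 < RR -> - g * phi <= ln RR ->
  ex_series (fun m => Cmod (th k m) * RR ^ m) ->
  Cmult (Oeval (k * mu) (th k) (xig g rho phi)) (Defs.Cpow (polarC rho phi) k) = Pk g mu th k (ln rho, phi).
Proof.
  intros Hrho HR Hphi Hex.
  set (w := (ln rho, phi) : C).
  set (u := (Ci * RtoC g * w)%C).
  unfold Oeval. rewrite xig_Cexp, polarC_Cexp by auto. fold w. fold u. rewrite !Cpow_Cexp.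
  rewrite <- Cexp_neg.
  set (a := fun m => (th k m * Cexp (RtoC (INR m) * u))%C).
  assert (Hb : forall m, Cmod (a m) <= Cmod (th k m) * RR ^ m).
  { intros m. unfold a. rewrite Cmod_mult. apply Rmult_le_compat_l. apply Cmod_ge_0.
    rewrite Cmod_Cexp.
    assert (Hf : fst (RtoC (INR m) * u)%C = INR m * (- g * phi)) by (unfold u, w; simpl; ring).
    rewrite Hf. rewrite <- (exp_ln RR) at 1 by auto. rewrite <- exp_INR_mult. apply exp_le_mono.
    pose proof (pos_INR m). nra. }
  destruct (Cseries_bound a _ Hb Hex) as [Ha _].
  assert (Ea : (fun m => (th k m * Defs.Cpow (Cexp u) m)%C) = a).
  { apply FunctionalExtensionality.functional_extensionality. intros m. unfold a. rewrite Cpow_Cexp. reflexivity. }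
  rewrite Ea.
  set (C0 := (Cexp (- (RtoC (INR (k * mu)) * u)) * Cexp (RtoC (INR k) * w))%C).
  assert (Hpt : forall m, (th k m * Cexp (lam g mu k m * w))%C = (C0 * a m)%C).
  { intros m. unfold C0, a. rewrite <- !Cmult_assoc.
    replace (th k m * Cexp (lam g mu k m * w))%C with (Cexp (lam g mu k m * w) * th k m)%C by ring.
    replace (Cexp (- (RtoC (INR (k * mu)) * u)) * (Cexp (RtoC (INR k) * w) * (th k m * Cexp (RtoC (INR m) * u))))%C
      with ((Cexp (- (RtoC (INR (k * mu)) * u)) * Cexp (RtoC (INR k) * w) * Cexp (RtoC (INR m) * u)) * th k m)%C by ring.
    f_equal. rewrite <- !Cexp_add. f_equal. unfold lam, u. rewrite RtoC_mult, RtoC_minus. ring. }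
  unfold Pk, trm.
  symmetry. apply Cseries_unique.
  - eapply is_series_ext. intros m. symmetry. apply Hpt.
    replace (Cexp (- (RtoC (INR (k * mu)) * u)) * Cseries a * Cexp (RtoC (INR k) * w))%C with (C0 * Cseries a)%C
      by (unfold C0; ring).
    apply (is_series_scal_l (K:=C_AbsRing) (V:=C_NormedModule) C0 a _ Ha).
  - apply (ex_series_le (K:=R_AbsRing) (V:=R_CompleteNormedModule) _ (fun m => Cmod C0 * (Cmod (th k m) * RR ^ m))).
    intros m. change (Rabs (Cmod (th k m * Cexp (lam g mu k m * w))) <= Cmod C0 * (Cmod (th k m) * RR ^ m)).
    rewrite Rabs_right by (apply Rle_ge, Cmod_ge_0). rewrite Hpt, Cmod_mult.
    apply Rmult_le_compat_l. apply Cmod_ge_0. auto.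
    apply ex_series_scal_R; auto.
Qed.

Lemma ex_series_zero (a : nat -> R) : (forall n, a n = 0) -> ex_series a.
Proof.
  intros H. apply (ex_series_le (K:=R_AbsRing) (V:=R_CompleteNormedModule) _ (fun n => 0 ^ n)).
  intros n. change (Rabs (a n) <= 0 ^ n). rewrite H, Rabs_R0. apply pow_le. lra.
  apply ex_series_geom. rewrite Rabs_R0. lra.
Qed.

Lemma tau_bounds r RR gamma alpha beta : 0 < r -> r < RR -> gamma <> 0 ->
  (0 < gamma -> - ln RR / gamma <= alpha /\ beta <= - ln r / gamma) ->
  (gamma < 0 -> - ln r / gamma <= alpha /\ beta <= - ln RR / gamma) ->
  forall phi, alpha < phi < beta -> ln r < - gamma * phi < ln RR.
Proof.
  intros hr hrR hg Hp Hn phi [H1 H2].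
  destruct (Rlt_or_le 0 gamma) as [Hg|Hg].
  - destruct (Hp Hg) as [Ha Hb].
    assert (A : - ln RR / gamma * gamma < phi * gamma) by (apply Rmult_lt_compat_r; lra).
    assert (B : phi * gamma < - ln r / gamma * gamma) by (apply Rmult_lt_compat_r; lra).
    replace (- ln RR / gamma * gamma) with (- ln RR) in A by (field; lra).
    replace (- ln r / gamma * gamma) with (- ln r) in B by (field; lra). lra.
  - assert (Hg' : gamma < 0) by lra. destruct (Hn Hg') as [Ha Hb].
    assert (A : - ln r / gamma * (- gamma) < phi * (- gamma)) by (apply Rmult_lt_compat_r; lra).
    assert (B : phi * (- gamma) < - ln RR / gamma * (- gamma)) by (apply Rmult_lt_compat_r; lra).
    replace (- ln r / gamma * (- gamma)) with (ln r) in A by (field; lra).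
    replace (- ln RR / gamma * (- gamma)) with (ln RR) in B by (field; lra). lra.
Qed.

Lemma part_i2 (r RR gamma : R) (N mu : nat) (hr : 0 < r) (hrR : r < RR) (hgamma : gamma <> 0) :
  forall alpha beta : R,
     alpha < beta -> beta - alpha < 2 * PI ->
     (0 < gamma -> - ln RR / gamma <= alpha /\ beta <= - ln r / gamma) ->
     (gamma < 0 -> - ln r / gamma <= alpha /\ beta <= - ln RR / gamma) ->
     forall theta, inH r RR gamma N mu 0 theta ->
     exists F : C -> C,
       (forall x, in_sector alpha beta x ->
          @ex_derive C_AbsRing C_NormedModule F x) /\
       (forall eps, 0 < eps -> exists K : nat, forall m : nat, (K <= m)%nat ->
          forall rho phi, 0 < rho < 1 -> alpha < phi < beta ->
          Cmod (Cminus (Hpartial gamma mu theta m rho phi) (F (polarC rho phi)))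
            < eps).
Proof.
  intros alpha beta Hab H2pi Hgp Hgn theta [H0 [HO [_ Hex]]].
  assert (HR : 0 < RR) by lra.
  pose proof (tau_bounds r RR gamma alpha beta hr hrR hgamma Hgp Hgn) as Htau.
  assert (HinO : forall k, ex_series (fun m => Cmod (theta k m) * RR ^ m)).
  { intros [|k]. apply ex_series_zero. intros n. rewrite H0, Cmod_0. ring.
    apply HO. lia. }
  assert (HA : forall k, ex_series (Amk r RR mu theta k)).
  { intros k. eapply ex_series_ext. intros m. symmetry. apply Amk_eq; auto.
    apply ex_series_scal_R; auto. }
  assert (HSer : forall k, Series (Amk r RR mu theta k) = Hterm r RR gamma N mu 0 theta k).
  { intros k. rewrite (Series_ext _ _ (fun m => Amk_eq r RR mu theta k m hr HR)).
    rewrite Series_scal_l. unfold Hterm, Onorm. simpl Nat.iter. reflexivity. }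
  assert (HAs : ex_series (fun k => Series (Amk r RR mu theta k))).
  { eapply ex_series_ext. intros k. symmetry. apply HSer. exact Hex. }
  set (good := fun w : C => fst w < 0 /\ alpha < snd w < beta).
  set (F := fun x : C => match excluded_middle_informative (exists w, good w /\ Cexp w = x) with
                         | left H => Gf gamma mu theta (proj1_sig (constructive_indefinite_description _ H))
                         | right _ => RtoC 0 end).
  assert (HF : forall w, good w -> F (Cexp w) = Gf gamma mu theta w).
  { intros w Hw. unfold F. destruct (excluded_middle_informative _) as [Hx|Hx].
    - destruct (constructive_indefinite_description _ Hx) as [w' [Hg' He']]. simpl. f_equal.
      apply (good_unique alpha beta); auto. apply Hg'. apply Hw.
    - exfalso. apply Hx. exists w. auto. }
  exists F. split.
  - intros x [rho [phi [Hrho [Hphi Hx]]]]. subst x. rewrite polarC_Cexp by lra.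
    set (w0 := (ln rho, phi) : C).
    assert (Hl : ln rho < 0). { rewrite <- ln_1. apply ln_increasing; lra. }
    apply (F_local_deriv (Gf gamma mu theta) F good w0 (Cseries (fun k => Pk' gamma mu theta k w0))).
    + exists (Rmin (- ln rho) (Rmin (phi - alpha) (beta - phi))). split.
      { repeat apply Rmin_pos; lra. }
      intros w Hw. pose proof (Cmod_fst (w - w0)%C). pose proof (Cmod_snd (w - w0)%C).
      pose proof (Rmin_l (- ln rho) (Rmin (phi - alpha) (beta - phi))).
      pose proof (Rmin_r (- ln rho) (Rmin (phi - alpha) (beta - phi))).
      pose proof (Rmin_l (phi - alpha) (beta - phi)). pose proof (Rmin_r (phi - alpha) (beta - phi)).
      destruct w as [w1 w2]. unfold w0 in *.
      change (Rabs (w1 + - ln rho) <= Cmod ((w1, w2) - (ln rho, phi))%C) in H.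
      change (Rabs (w2 + - phi) <= Cmod ((w1, w2) - (ln rho, phi))%C) in H1.
      assert (Rabs (w1 + - ln rho) < - ln rho) by lra.
      assert (Rabs (w2 + - phi) < phi - alpha) by lra.
      assert (Rabs (w2 + - phi) < beta - phi) by lra.
      apply Rabs_def2 in H6. apply Rabs_def2 in H7. apply Rabs_def2 in H8.
      split; simpl; lra.
    + exact HF.
    + destruct (Htau phi Hphi) as [Hl1 Hl2].
      set (l0 := - gamma * phi) in *.
      set (eta := Rmin (l0 - ln r) (ln RR - l0) / 2).
      assert (Heta : 0 < eta) by (unfold eta; apply Rdiv_lt_0_compat; [apply Rmin_pos|]; lra).
      assert (Heta1 : eta <= (l0 - ln r) / 2) by (unfold eta; pose proof (Rmin_l (l0 - ln r) (ln RR - l0)); lra).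
      assert (Heta2 : eta <= (ln RR - l0) / 2) by (unfold eta; pose proof (Rmin_r (l0 - ln r) (ln RR - l0)); lra).
      assert (Hga : 0 < Rabs gamma) by (apply Rabs_pos_lt; auto).
      set (d := Rmin (- ln rho / 2) (eta / Rabs gamma)).
      assert (Hd : 0 < d) by (unfold d; apply Rmin_pos; [lra | apply Rdiv_lt_0_compat; lra]).
      assert (Hd1 : d <= - ln rho / 2) by apply Rmin_l.
      assert (Hd2 : d <= eta / Rabs gamma) by apply Rmin_r.
      apply (Gf_deriv r RR gamma mu theta hr HR HA HAs w0 d (ln rho / 2) (l0 - eta) (l0 + eta)); auto; try lra.
      intros y Hy. pose proof (Cmod_fst (y - w0)%C). pose proof (Cmod_snd (y - w0)%C).
      destruct y as [y1 y2]. unfold w0 in *.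
      change (Rabs (y1 + - ln rho) <= Cmod ((y1, y2) - (ln rho, phi))%C) in H.
      change (Rabs (y2 + - phi) <= Cmod ((y1, y2) - (ln rho, phi))%C) in H1.
      assert (A1 : Rabs (y1 + - ln rho) < - ln rho / 2) by lra.
      assert (A2 : Rabs (y2 + - phi) < eta / Rabs gamma) by lra.
      apply Rabs_def2 in A1.
      assert (A3 : Rabs (- gamma * y2 - l0) <= eta).
      { unfold l0. replace (- gamma * y2 - - gamma * phi) with (- gamma * (y2 + - phi)) by ring.
        rewrite Rabs_mult, Rabs_Ropp.
        apply Rmult_lt_compat_l with (r := Rabs gamma) in A2; auto.
        replace (Rabs gamma * (eta / Rabs gamma)) with eta in A2 by (field; lra). lra. }
      apply Rabs_le_between' in A3 || idtac.
      simpl. split. lra. exact A3.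
  - intros eps Heps.
    pose proof (Series_correct _ HAs) as HSH.
    destruct (proj1 (R_lim_eps _ _) HSH eps Heps) as [N0 HN0].
    exists N0. intros m Hm rho phi Hrho Hphi.
    specialize (HN0 m Hm).
    assert (HN0' : Rabs (sum_n (fun k => Series (Amk r RR mu theta k)) m - Series (fun k => Series (Amk r RR mu theta k))) < eps) by exact HN0.
    clear HN0.
    set (w := (ln rho, phi) : C).
    assert (Hl : ln rho < 0). { rewrite <- ln_1. apply ln_increasing; lra. }
    assert (Hgw : good w) by (unfold good, w; simpl; split; lra).
    rewrite polarC_Cexp by lra. fold w. rewrite (HF w Hgw).
    destruct (Htau phi Hphi) as [Hl1 Hl2].
    assert (Hpart : Hpartial gamma mu theta m rho phi = sum_n (fun k => Pk gamma mu theta k w) m).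
    { unfold Hpartial. apply sum_n_ext. intros k. apply (Oeval_Pk RR); auto; lra. }
    rewrite Hpart.
    assert (HG : is_series (K:=C_AbsRing) (V:=C_NormedModule) (fun k => Pk gamma mu theta k w) (Gf gamma mu theta w)).
    { apply (Gf_is r RR gamma mu theta hr HR HA HAs w 0 (ln r) (ln RR)); unfold w; simpl; lra. }
    set (Sp := sum_n (fun k => Pk gamma mu theta k w) m).
    assert (Htail : is_series (K:=C_AbsRing) (V:=C_NormedModule) (fun j => Pk gamma mu theta (S m + j)%nat w) (Gf gamma mu theta w - Sp)%C).
    { apply (is_series_incr_n (fun k => Pk gamma mu theta k w) (S m)). lia. simpl pred.
      match goal with |- is_series _ ?x => replace x with (Gf gamma mu theta w) end. exact HG.
      change (Gf gamma mu theta w = (Gf gamma mu theta w - Sp + Sp)%C). unfold Sp. ring. }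
    set (SH := Series (fun k => Series (Amk r RR mu theta k))) in *.
    set (sH := sum_n (fun k => Series (Amk r RR mu theta k)) m) in *.
    assert (HtailH : is_series (fun j => Series (Amk r RR mu theta (S m + j)%nat)) (SH - sH)).
    { apply (is_series_incr_n (fun k => Series (Amk r RR mu theta k)) (S m)). lia. simpl pred.
      match goal with |- is_series _ ?x => replace x with SH end. exact HSH.
      change (SH = SH - sH + sH). ring. }
    assert (Hb : Cmod (Gf gamma mu theta w - Sp)%C <= SH - sH).
    { apply (Cseries_norm_le _ _ (fun j => Series (Amk r RR mu theta (S m + j)%nat)) _ Htail); auto.
      intros j. apply (Pk_bound r RR gamma mu theta hr HR HA (S m + j)%nat w 0 (ln r) (ln RR)); unfold w; simpl; lra. }
    replace (Cminus Sp (Gf gamma mu theta w)) with (- (Gf gamma mu theta w - Sp))%C by ring.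
    rewrite Cmod_opp. apply Rabs_def2 in HN0'. lra.
Qed.

Definition mlt (g : R) (nu : nat) (a : R) (m : nat) : C := (RtoC a + Ci * RtoC (g * (INR m - INR nu)))%C.

Lemma iter_opT j g nu a f m : Nat.iter j (opT g nu a) f m = (Defs.Cpow (mlt g nu a m) j * f m)%C.
Proof.
  induction j. simpl. ring.
  simpl Nat.iter. unfold opT at 1. rewrite IHj. simpl Defs.Cpow. unfold mlt. ring.
Qed.

Lemma Cmod_Cpow z j : Cmod (Defs.Cpow z j) = Cmod z ^ j.
Proof. induction j. simpl. apply Cmod_1. simpl Defs.Cpow. rewrite Cmod_mult, IHj. simpl. ring. Qed.

Lemma Cmod_mlt_ge g nu a m : Rabs a <= Cmod (mlt g nu a m).
Proof.
  pose proof (Cmod_fst (mlt g nu a m)). replace (fst (mlt g nu a m)) with a in H by (unfold mlt; simpl; ring). auto.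
Qed.

Lemma Cmod_mlt_mono g nu a b m : 0 <= a <= b -> Cmod (mlt g nu a m) <= Cmod (mlt g nu b m).
Proof.
  intros H. unfold Cmod, mlt. simpl. apply sqrt_le_1_alt. nra.
Qed.

Lemma Series_nonneg (a : nat -> R) : (forall n, 0 <= a n) -> ex_series a -> 0 <= Series a.
Proof.
  intros H He. assert (Series (fun n => 0 * a n) <= Series a).
  { apply Series_le; auto. intros n. specialize (H n). lra. }
  rewrite Series_scal_l in H0. lra.
Qed.

Lemma Hterm_nonneg r RR g N mu j th k : 0 < r -> 0 < RR ->
  ex_series (fun m => Cmod (Nat.iter j (opT g (k * mu) (INR (k + N))) (th k) m) * RR ^ m) ->
  0 <= Hterm r RR g N mu j th k.
Proof.
  intros Hr HR He. unfold Hterm, Onorm. apply Rmult_le_pos.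
  left. apply Rinv_0_lt_compat, pow_lt; auto.
  apply Series_nonneg; auto. intros n. apply Rmult_le_pos. apply Cmod_ge_0. left; apply pow_lt; auto.
Qed.

Lemma Hcompare r RR g N mu j j' th th' : 0 < r -> 0 < RR ->
  (forall k m, Cmod (Nat.iter j' (opT g (k * mu) (INR (k + N))) (th' k) m) <=
               Cmod (Nat.iter j (opT g (k * mu) (INR (k + N))) (th k) m)) ->
  (forall k, ex_series (fun m => Cmod (Nat.iter j (opT g (k * mu) (INR (k + N))) (th k) m) * RR ^ m)) ->
  ex_series (Hterm r RR g N mu j th) ->
  (forall k, ex_series (fun m => Cmod (Nat.iter j' (opT g (k * mu) (INR (k + N))) (th' k) m) * RR ^ m)) /\
  ex_series (Hterm r RR g N mu j' th') /\
  Hnorm r RR g N mu j' th' <= Hnorm r RR g N mu j th.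
Proof.
  intros Hr HR Hle Hex HexH.
  assert (HRm : forall m, 0 < RR ^ m) by (intros; apply pow_lt; auto).
  assert (Hk : forall k, ex_series (fun m => Cmod (Nat.iter j' (opT g (k * mu) (INR (k + N))) (th' k) m) * RR ^ m)).
  { intros k. apply (ex_series_le (K:=R_AbsRing) (V:=R_CompleteNormedModule) _ (fun m => Cmod (Nat.iter j (opT g (k * mu) (INR (k + N))) (th k) m) * RR ^ m)); [|apply Hex].
    intros m. change (Rabs (Cmod (Nat.iter j' (opT g (k * mu) (INR (k + N))) (th' k) m) * RR ^ m) <=
       Cmod (Nat.iter j (opT g (k * mu) (INR (k + N))) (th k) m) * RR ^ m).
    rewrite Rabs_right. apply Rmult_le_compat_r. left; auto. auto.
    apply Rle_ge, Rmult_le_pos. apply Cmod_ge_0. left; auto. }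
  assert (Hterm_le : forall k, Hterm r RR g N mu j' th' k <= Hterm r RR g N mu j th k).
  { intros k. unfold Hterm, Onorm. apply Rmult_le_compat_l.
    left. apply Rinv_0_lt_compat, pow_lt; auto.
    apply Series_le; auto. intros m. split. apply Rmult_le_pos. apply Cmod_ge_0. left; auto.
    apply Rmult_le_compat_r. left; auto. auto. }
  assert (HexH' : ex_series (Hterm r RR g N mu j' th')).
  { apply (ex_series_le (K:=R_AbsRing) (V:=R_CompleteNormedModule) _ (Hterm r RR g N mu j th)); [|apply HexH].
    intros k. change (Rabs (Hterm r RR g N mu j' th' k) <= Hterm r RR g N mu j th k).
    rewrite Rabs_right. auto. apply Rle_ge, Hterm_nonneg; auto. }
  split; auto. split; auto.
  unfold Hnorm. apply Series_le; auto. intros k. split; auto. apply Hterm_nonneg; auto.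
Qed.

Lemma iter_zero j g nu a (f : nat -> C) m : f m = 0%C -> Nat.iter j (opT g nu a) f m = 0%C.
Proof. intros H. rewrite iter_opT, H. ring. Qed.

Lemma exk_of_inH r RR g N mu j th : inH r RR g N mu j th ->
  forall k, ex_series (fun m => Cmod (Nat.iter j (opT g (k * mu) (INR (k + N))) (th k) m) * RR ^ m).
Proof.
  intros [H0 [_ [HOj _]]] [|k].
  - apply ex_series_zero. intros m. rewrite iter_zero by auto. rewrite Cmod_0. ring.
  - apply HOj. lia.
Qed.

Lemma mlt_ge1 g k mu N m : (1 <= k)%nat -> 1 <= Cmod (mlt g (k * mu) (INR (k + N)) m).
Proof.
  intros Hk. eapply Rle_trans; [|apply Cmod_mlt_ge]. rewrite Rabs_right.
  apply (le_INR 1). lia. apply Rle_ge, pos_INR.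
Qed.

Lemma part_i1 r RR g N mu n (hr : 0 < r) (hrR : r < RR) :
  forall j theta, (1 <= j <= n)%nat ->
     inH r RR g N mu j theta ->
     inH r RR g N mu (j - 1) theta /\
     Hnorm r RR g N mu (j - 1) theta <= Hnorm r RR g N mu j theta.
Proof.
  intros j th Hj HH. pose proof (exk_of_inH _ _ _ _ _ _ _ HH) as Hexk.
  destruct HH as [H0 [HO [HOj Hex]]].
  assert (Hle : forall k m, Cmod (Nat.iter (j - 1) (opT g (k * mu) (INR (k + N))) (th k) m) <=
                            Cmod (Nat.iter j (opT g (k * mu) (INR (k + N))) (th k) m)).
  { intros [|k] m.
    - rewrite !iter_zero by auto. lra.
    - rewrite !iter_opT, !Cmod_mult, !Cmod_Cpow.
      pose proof (mlt_ge1 g (S k) mu N m ltac:(lia)).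
      set (z := Cmod (mlt g (S k * mu) (INR (S k + N)) m)) in *.
      replace j with (S (j - 1)) at 2 by lia. simpl pow.
      apply Rmult_le_compat_r. apply Cmod_ge_0.
      assert (0 <= z ^ (j - 1)) by (apply pow_le; lra). nra. }
  destruct (Hcompare r RR g N mu j (j - 1) th th ltac:(lra) ltac:(lra) Hle Hexk Hex) as [A [B C']].
  split; auto. split; auto. split; auto. split; auto.
  intros k Hk. apply A.
Qed.

Lemma part_iii r RR g N mu n (hr : 0 < r) (hrR : r < RR) :
  forall j, (1 <= j <= n)%nat ->
     (forall theta, inH r RR g N mu j theta ->
        inH r RR g N mu (j - 1) (Hdelta g mu theta)) /\
     (forall theta0, inH r RR g N mu j theta0 ->
        forall eps, 0 < eps -> exists eta, 0 < eta /\
        forall theta, inH r RR g N mu j theta ->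
          Hnorm r RR g N mu j (Hsub theta theta0) < eta ->
          Hnorm r RR g N mu (j - 1)
            (Hsub (Hdelta g mu theta) (Hdelta g mu theta0)) < eps).
Proof.
  intros j Hj.
  assert (Hmono : forall k m, Cmod (mlt g (k * mu) (INR k) m) <= Cmod (mlt g (k * mu) (INR (k + N)) m)).
  { intros k m. apply Cmod_mlt_mono. split. apply pos_INR. apply le_INR. lia. }
  assert (Hkey : forall (f : nat -> C) k m,
     Cmod (Nat.iter (j - 1) (opT g (k * mu) (INR (k + N))) (opT g (k * mu) (INR k) f) m) <=
     Cmod (Nat.iter j (opT g (k * mu) (INR (k + N))) f m)).
  { intros f k m. rewrite !iter_opT. unfold opT. fold (mlt g (k * mu) (INR k) m).
    rewrite !Cmod_mult, !Cmod_Cpow.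
    replace j with (S (j - 1)) at 2 by lia. simpl pow.
    pose proof (Hmono k m). pose proof (Cmod_ge_0 (mlt g (k * mu) (INR k) m)).
    set (z := Cmod (mlt g (k * mu) (INR (k + N)) m)) in *.
    assert (0 <= z ^ (j - 1)) by (apply pow_le; lra).
    pose proof (Cmod_ge_0 (f m)).
    rewrite <- Rmult_assoc. apply Rmult_le_compat_r; auto. nra. }
  split.
  - intros th HH. pose proof (exk_of_inH _ _ _ _ _ _ _ HH) as Hexk.
    destruct HH as [H0 [HO [HOj Hex]]].
    destruct (Hcompare r RR g N mu j (j - 1) th (Hdelta g mu th) ltac:(lra) ltac:(lra)
                (fun k m => Hkey (th k) k m) Hexk Hex) as [A [B C']].
    split. { intros m. unfold Hdelta, opT. rewrite H0. ring. }
    split.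
    { intros k Hk. unfold inO.
      apply (ex_series_le (K:=R_AbsRing) (V:=R_CompleteNormedModule) _ (fun m => Cmod (Nat.iter j (opT g (k * mu) (INR (k + N))) (th k) m) * RR ^ m)); [|apply Hexk].
      intros m. change (Rabs (Cmod (Hdelta g mu th k m) * RR ^ m) <= Cmod (Nat.iter j (opT g (k * mu) (INR (k + N))) (th k) m) * RR ^ m).
      rewrite Rabs_right by (apply Rle_ge, Rmult_le_pos; [apply Cmod_ge_0 | left; apply pow_lt; lra]).
      apply Rmult_le_compat_r. left; apply pow_lt; lra.
      rewrite iter_opT. unfold Hdelta, opT. fold (mlt g (k * mu) (INR k) m). rewrite !Cmod_mult, Cmod_Cpow.
      pose proof (mlt_ge1 g k mu N m Hk). pose proof (Hmono k m).
      set (z := Cmod (mlt g (k * mu) (INR (k + N)) m)) in *.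
      assert (z <= z ^ j). { replace j with (S (j - 1)) by lia. simpl. 
        assert (1 <= z ^ (j - 1)) by (apply pow_R1_Rle; lra). nra. }
      apply Rmult_le_compat_r. apply Cmod_ge_0. lra. }
    split; auto. intros k Hk. apply A.
  - intros th0 HH0 eps Heps. exists eps. split; auto. intros th HH Hn.
    pose proof (exk_of_inH _ _ _ _ _ _ _ HH) as Hexk. pose proof (exk_of_inH _ _ _ _ _ _ _ HH0) as Hexk0.
    destruct HH as [_ [_ [_ Hex]]]. destruct HH0 as [_ [_ [_ Hex0]]].
    set (D := Hsub th th0).
    assert (HiD : forall k m, Nat.iter j (opT g (k * mu) (INR (k + N))) (D k) m =
        (Nat.iter j (opT g (k * mu) (INR (k + N))) (th k) m - Nat.iter j (opT g (k * mu) (INR (k + N))) (th0 k) m)%C).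
    { intros k m. rewrite !iter_opT. unfold D, Hsub. unfold Cminus. ring. }
    assert (HD1 : forall k m, Cmod (Nat.iter j (opT g (k * mu) (INR (k + N))) (D k) m) * RR ^ m <=
       Cmod (Nat.iter j (opT g (k * mu) (INR (k + N))) (th k) m) * RR ^ m +
       Cmod (Nat.iter j (opT g (k * mu) (INR (k + N))) (th0 k) m) * RR ^ m).
    { intros k m. rewrite HiD. rewrite <- Rmult_plus_distr_r. apply Rmult_le_compat_r. left; apply pow_lt; lra.
      unfold Cminus. eapply Rle_trans. apply Cmod_triangle. rewrite Cmod_opp. lra. }
    assert (HexkD : forall k, ex_series (fun m => Cmod (Nat.iter j (opT g (k * mu) (INR (k + N))) (D k) m) * RR ^ m)).
    { intros k. apply (ex_series_le (K:=R_AbsRing) (V:=R_CompleteNormedModule) _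
         (fun m => Cmod (Nat.iter j (opT g (k * mu) (INR (k + N))) (th k) m) * RR ^ m +
                   Cmod (Nat.iter j (opT g (k * mu) (INR (k + N))) (th0 k) m) * RR ^ m)).
      intros m. change (Rabs (Cmod (Nat.iter j (opT g (k * mu) (INR (k + N))) (D k) m) * RR ^ m) <=
          Cmod (Nat.iter j (opT g (k * mu) (INR (k + N))) (th k) m) * RR ^ m +
          Cmod (Nat.iter j (opT g (k * mu) (INR (k + N))) (th0 k) m) * RR ^ m).
      rewrite Rabs_right by (apply Rle_ge, Rmult_le_pos; [apply Cmod_ge_0 | left; apply pow_lt; lra]). apply HD1.
      apply (ex_series_plus (K:=R_AbsRing) (V:=R_NormedModule)); auto. }
    assert (HtD : forall k, Hterm r RR g N mu j D k <= Hterm r RR g N mu j th k + Hterm r RR g N mu j th0 k).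
    { intros k. unfold Hterm, Onorm. rewrite <- Rmult_plus_distr_l. apply Rmult_le_compat_l.
      left. apply Rinv_0_lt_compat, pow_lt; lra.
      rewrite <- Series_plus by auto. apply Series_le.
      intros m. split. apply Rmult_le_pos. apply Cmod_ge_0. left; apply pow_lt; lra. apply HD1.
      apply (ex_series_plus (K:=R_AbsRing) (V:=R_NormedModule)); auto. }
    assert (HexD : ex_series (Hterm r RR g N mu j D)).
    { apply (ex_series_le (K:=R_AbsRing) (V:=R_CompleteNormedModule) _
         (fun k => Hterm r RR g N mu j th k + Hterm r RR g N mu j th0 k)).
      intros k. change (Rabs (Hterm r RR g N mu j D k) <= Hterm r RR g N mu j th k + Hterm r RR g N mu j th0 k).
      rewrite Rabs_right. apply HtD. apply Rle_ge, Hterm_nonneg; auto; lra.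
      apply (ex_series_plus (K:=R_AbsRing) (V:=R_NormedModule)); auto. }
    assert (Hle : forall k m, Cmod (Nat.iter (j - 1) (opT g (k * mu) (INR (k + N))) (Hsub (Hdelta g mu th) (Hdelta g mu th0) k) m) <=
                              Cmod (Nat.iter j (opT g (k * mu) (INR (k + N))) (D k) m)).
    { intros k m. eapply Rle_trans; [|apply (Hkey (D k) k m)]. right. f_equal.
      rewrite !iter_opT. f_equal. unfold Hsub, Hdelta, D, opT, Hsub. unfold Cminus. ring. }
    destruct (Hcompare r RR g N mu j (j - 1) D _ ltac:(lra) ltac:(lra) Hle HexkD HexD) as [_ [_ C']].
    fold D in Hn. lra.
Qed.

Lemma sum_n_scal_R (c : R) (f : nat -> R) N : c * sum_n f N = sum_n (fun n => c * f n) N.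
Proof.
  induction N. rewrite !sum_O. auto. rewrite !sum_Sn.
  change (c * (sum_n f N + f (S N)) = sum_n (fun n => c * f n) N + c * f (S N)). rewrite <- IHN. ring.
Qed.

Lemma sum_n_zero_C (f : nat -> C) N : (forall n, f n = RtoC 0) -> sum_n f N = RtoC 0.
Proof.
  intros H. induction N. rewrite sum_O. auto. rewrite sum_Sn, IHN, H.
  change (Cplus (RtoC 0) (RtoC 0) = RtoC 0). ring.
Qed.

Lemma is_series_finsum (c : nat -> nat -> R) (l : nat -> R) K :
  (forall a, is_series (c a) (l a)) -> is_series (fun m => sum_n (fun a => c a m) K) (sum_n l K).
Proof.
  intros H. induction K.
  - rewrite sum_O. eapply is_series_ext; [|apply (H 0%nat)]. intros m. rewrite sum_O. auto.
  - rewrite sum_Sn. eapply is_series_ext; [|apply (is_series_plus _ _ _ _ IHK (H (S K)))].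
    intros m. simpl. rewrite sum_Sn. reflexivity.
Qed.

Lemma cauchy_nonneg (u v : nat -> R) : (forall n, 0 <= u n) -> (forall n, 0 <= v n) ->
  ex_series u -> ex_series v ->
  is_series (fun m => sum_n (fun i => u i * v (m - i)%nat) m) (Series u * Series v).
Proof.
  intros Hu Hv Eu Ev.
  assert (Au : ex_series (fun n => Rabs (u n))) by (eapply ex_series_ext; [|exact Eu]; intros n; rewrite Rabs_right; auto; apply Rle_ge; auto).
  assert (Av : ex_series (fun n => Rabs (v n))) by (eapply ex_series_ext; [|exact Ev]; intros n; rewrite Rabs_right; auto; apply Rle_ge; auto).
  pose proof (is_series_mult u v _ _ (Series_correct _ Eu) (Series_correct _ Ev) Au Av).
  eapply is_series_ext; [|exact H]. intros m. simpl. rewrite sum_n_Reals. reflexivity.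
Qed.

Lemma part_ii r RR g N mu (hr : 0 < r) (hrR : r < RR) :
  forall theta1 theta2,
     inH r RR g N mu 0 theta1 -> inH r RR g N mu 0 theta2 ->
     inH r RR g N mu 0 (Hmul theta1 theta2) /\
     Hnorm r RR g N mu 0 (Hmul theta1 theta2)
       <= Hnorm r RR g N mu 0 theta1 * Hnorm r RR g N mu 0 theta2.
Proof.
  intros th1 th2 HH1 HH2.
  assert (HR : 0 < RR) by lra.
  assert (HRm : forall m, 0 < RR ^ m) by (intros; apply pow_lt; auto).
  pose proof (exk_of_inH _ _ _ _ _ _ _ HH1) as E1. pose proof (exk_of_inH _ _ _ _ _ _ _ HH2) as E2.
  simpl Nat.iter in E1, E2.
  destruct HH1 as [Z1 [_ [_ X1]]]. destruct HH2 as [Z2 [_ [_ X2]]].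
  set (A1 := fun a i => Cmod (th1 a i) * RR ^ i). set (A2 := fun a i => Cmod (th2 a i) * RR ^ i).
  assert (A1p : forall a i, 0 <= A1 a i) by (intros; unfold A1; apply Rmult_le_pos; [apply Cmod_ge_0 | left; auto]).
  assert (A2p : forall a i, 0 <= A2 a i) by (intros; unfold A2; apply Rmult_le_pos; [apply Cmod_ge_0 | left; auto]).
  set (B := fun k m => sum_n (fun a => sum_n (fun i => A1 a i * A2 (k - a)%nat (m - i)%nat) m) k).
  assert (HB : forall k m, Cmod (Hmul th1 th2 k m) * RR ^ m <= B k m).
  { intros k m. unfold Hmul, B.
    apply Rle_trans with (sum_n (fun a => sum_n (fun i => Cmod (th1 a i) * Cmod (th2 (k - a)%nat (m - i)%nat)) m) k * RR ^ m).
    { apply Rmult_le_compat_r. left; auto. eapply Rle_trans. apply Cmod_sum_n.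
      apply sum_n_le_R. intros a. eapply Rle_trans. apply Cmod_sum_n.
      apply sum_n_le_R. intros i. rewrite Cmod_mult. lra. }
    rewrite Rmult_comm, sum_n_scal_R. apply sum_n_le_R. intros a.
    rewrite sum_n_scal_R. apply sum_n_le_R'. intros i Hi. unfold A1, A2.
    replace (RR ^ m) with (RR ^ i * RR ^ (m - i)) by (rewrite <- pow_add; f_equal; lia). right; ring. }
  set (S1 := fun a => Series (A1 a)). set (S2 := fun a => Series (A2 a)).
  assert (HBs : forall k, is_series (B k) (sum_n (fun a => S1 a * S2 (k - a)%nat) k)).
  { intros k. unfold B. apply (is_series_finsum (fun a m => sum_n (fun i => A1 a i * A2 (k - a)%nat (m - i)%nat) m)).
    intros a. apply cauchy_nonneg; auto. apply E1. apply E2. }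
  assert (HinO : forall k, ex_series (fun m => Cmod (Hmul th1 th2 k m) * RR ^ m)).
  { intros k. apply (ex_series_le (K:=R_AbsRing) (V:=R_CompleteNormedModule) _ (B k)).
    intros m. change (Rabs (Cmod (Hmul th1 th2 k m) * RR ^ m) <= B k m).
    rewrite Rabs_right by (apply Rle_ge, Rmult_le_pos; [apply Cmod_ge_0 | left; auto]). auto.
    eexists; apply HBs. }
  set (H1 := Hterm r RR g N mu 0 th1). set (H2 := Hterm r RR g N mu 0 th2).
  assert (H1e : forall a, H1 a = / r ^ (a * mu) * S1 a) by (intros; reflexivity).
  assert (H2e : forall a, H2 a = / r ^ (a * mu) * S2 a) by (intros; reflexivity).
  assert (H1p : forall a, 0 <= H1 a) by (intros; apply Hterm_nonneg; auto; apply E1).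
  assert (H2p : forall a, 0 <= H2 a) by (intros; apply Hterm_nonneg; auto; apply E2).
  assert (Hle : forall k, Hterm r RR g N mu 0 (Hmul th1 th2) k <= sum_n (fun a => H1 a * H2 (k - a)%nat) k).
  { intros k. unfold Hterm at 1, Onorm. simpl Nat.iter.
    apply Rle_trans with (/ r ^ (k * mu) * sum_n (fun a => S1 a * S2 (k - a)%nat) k).
    { apply Rmult_le_compat_l. left; apply Rinv_0_lt_compat, pow_lt; auto.
      rewrite <- (is_series_unique _ _ (HBs k)). apply Series_le.
      intros m. split. apply Rmult_le_pos. apply Cmod_ge_0. left; auto. auto.
      eexists; apply HBs. }
    rewrite sum_n_scal_R. apply sum_n_le_R'. intros a Ha. rewrite H1e, H2e.
    replace (r ^ (k * mu)) with (r ^ (a * mu) * r ^ ((k - a) * mu)) by (rewrite <- pow_add; f_equal; nia).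
    right. field. split; apply pow_nonzero; lra. }
  assert (Hprod : is_series (fun k => sum_n (fun a => H1 a * H2 (k - a)%nat) k)
                    (Hnorm r RR g N mu 0 th1 * Hnorm r RR g N mu 0 th2)).
  { apply cauchy_nonneg; auto. }
  assert (HexM : ex_series (Hterm r RR g N mu 0 (Hmul th1 th2))).
  { apply (ex_series_le (K:=R_AbsRing) (V:=R_CompleteNormedModule) _ (fun k => sum_n (fun a => H1 a * H2 (k - a)%nat) k)).
    intros k. change (Rabs (Hterm r RR g N mu 0 (Hmul th1 th2) k) <= sum_n (fun a => H1 a * H2 (k - a)%nat) k).
    rewrite Rabs_right. auto. apply Rle_ge, Hterm_nonneg; auto. apply HinO. eexists; exact Hprod. }
  split.
  - split. { intros m. unfold Hmul. rewrite sum_O. apply sum_n_zero_C. intros i. rewrite Z1. ring. }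
    split. { intros k Hk. apply HinO. }
    split. { intros k Hk. apply HinO. }
    auto.
  - rewrite <- (is_series_unique _ _ Hprod). unfold Hnorm at 1. apply Series_le.
    intros k. split; auto. apply Hterm_nonneg; auto. apply HinO. eexists; exact Hprod.
Qed.

Theorem lemma6 (r RR gamma : R) (N mu n : nat)
  (hr : 0 < r) (hrR : r < RR) (hgamma : gamma <> 0)
  (hmu : (1 <= mu)%nat) (hn : (1 <= n)%nat) :
  (* (i) nested inclusions and monotonicity of the norms *)
  (forall j theta, (1 <= j <= n)%nat ->
     inH r RR gamma N mu j theta ->
     inH r RR gamma N mu (j - 1) theta /\
     Hnorm r RR gamma N mu (j - 1) theta <= Hnorm r RR gamma N mu j theta) /\
  (* (i) H^0 is contained in O(S_1) for every admissible sector S_1 *)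
  (forall alpha beta : R,
     alpha < beta -> beta - alpha < 2 * PI ->
     (0 < gamma -> - ln RR / gamma <= alpha /\ beta <= - ln r / gamma) ->
     (gamma < 0 -> - ln r / gamma <= alpha /\ beta <= - ln RR / gamma) ->
     forall theta, inH r RR gamma N mu 0 theta ->
     exists F : C -> C,
       (forall x, in_sector alpha beta x ->
          @ex_derive C_AbsRing C_NormedModule F x) /\
       (forall eps, 0 < eps -> exists K : nat, forall m : nat, (K <= m)%nat ->
          forall rho phi, 0 < rho < 1 -> alpha < phi < beta ->
          Cmod (Cminus (Hpartial gamma mu theta m rho phi) (F (polarC rho phi)))
            < eps)) /\
  (* (ii) H^0 is a Banach-algebra-like: closed under product, submultiplicative *)
  (forall theta1 theta2,
     inH r RR gamma N mu 0 theta1 -> inH r RR gamma N mu 0 theta2 ->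
     inH r RR gamma N mu 0 (Hmul theta1 theta2) /\
     Hnorm r RR gamma N mu 0 (Hmul theta1 theta2)
       <= Hnorm r RR gamma N mu 0 theta1 * Hnorm r RR gamma N mu 0 theta2) /\
  (* (iii) delta maps H^j to H^{j-1} continuously *)
  (forall j, (1 <= j <= n)%nat ->
     (forall theta, inH r RR gamma N mu j theta ->
        inH r RR gamma N mu (j - 1) (Hdelta gamma mu theta)) /\
     (forall theta0, inH r RR gamma N mu j theta0 ->
        forall eps, 0 < eps -> exists eta, 0 < eta /\
        forall theta, inH r RR gamma N mu j theta ->
          Hnorm r RR gamma N mu j (Hsub theta theta0) < eta ->
          Hnorm r RR gamma N mu (j - 1)
            (Hsub (Hdelta gamma mu theta) (Hdelta gamma mu theta0)) < eps)).
Proof.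
  split; [|split; [|split]].
  - apply (part_i1 r RR gamma N mu n hr hrR).
  - apply (part_i2 r RR gamma N mu hr hrR hgamma).
  - apply (part_ii r RR gamma N mu hr hrR).
  - apply (part_iii r RR gamma N mu n hr hrR).
Qed.
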